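(* Let $\lambda,\mu\in\Lambda$, $g\in\mathcal{D}_{\lambda\mu}$ and $A=\kappa(\lambda,g,\mu)$. Then $W_{\delta(A)}=g^{-1}W_\lambda g\cap W_\mu$.
   Context: Fix integers $r\ge 0$, $d\ge 2$, $n=2r+2$, $D=2d+2$. $W$ is the group of bijections $g:\mathbb{Z}\to\mathbb{Z}$ with $g(i+D)=g(i)+D$, $g(-i)=-g(i)$; it is a Coxeter group with simple reflections $s_0,\dots,s_d$ where (elements determined by values on $1,\dots,d$) $s_0(1)=-1$, $s_0(k)=k$ ($k\ge2$); $s_d(d)=d+2$, $s_d(k)=k$ ($k<d$); $s_i$ ($1\le i\le d-1$) swaps $i,i+1$. $\ell$ is Coxeter length. For $r'\ge 0$ let $\Lambda_{r',d}$ be the set of $\lambda=(\lambda_0,\dots,\lambda_{r'+1})\in\mathbb{N}^{r'+2}$ with sum $d$, and $\Lambda=\Lambda_{r,d}$. For $\lambda\in\Lambda_{r',d}$ put $\lambda_{0,i}=\lambda_0+\dots+\lambda_i$, let $W_\lambda$ be generated by $\{s_0,\dots,s_d\}\setminus\{s_{\lambda_{0,0}},\dots,s_{\lambda_{0,r'}}\}$, and define intervals $R_0^\lambda=[-\lambda_0..\lambda_0]$, $R_i^\lambda=(\lambda_{0,i-1}..\lambda_{0,i}]$ ($1\le i\le r'$), $R^\lambda_{r'+1}=[d+1-\lambda_{r'+1}..d+1+\lambda_{r'+1}]$, extended by $R^\lambda_{-i}=-R^\lambda_i$, $R^\lambda_{i+2r'+2}=R^\lambda_i+D$. Let $\mathcal{D}_\lambda=\{g\in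 W\mid\ell(wg)=\ell(w)+\ell(g)\ \forall w\in W_\lambda\}$ and $\mathcal{D}_{\lambda\mu}=\mathcal{D}_\lambda\cap\mathcal{D}_\mu^{-1}$. For $\lambda,\mu\in\Lambda$, $g\in W$, $\kappa(\lambda,g,\mu)$ is the $\mathbb{Z}\times\mathbb{Z}$ matrix with $(i,j)$-entry $|R_i^\lambda\cap g(R_j^\mu)|$. For such a matrix $A=(a_{ij})$ (which satisfies $a_{-i,-j}=a_{ij}=a_{i+n,j+n}$ with $a_{00},a_{r+1,r+1}$ odd) set $a'_{ii}=(a_{ii}-1)/2$ for $i\in\{0,r+1\}$. Define $\delta(A)$: choose $k_j\ge0$ ($0\le j\le r+1$) with $a_{ij}=0$ unless $|i-j|\le k_j$; $\delta(A)\in\Lambda_{\mathfrak r,d}$ with $\mathfrak r=k_0+\sum_{j=1}^r(2k_j+1)+k_{r+1}$ is the sequence consisting of $a'_{00},a_{10},a_{20},\dots,a_{k_0,0}$, followed, for $j=1,\dots,r$ in turn, by $a_{ij}$ for $i=j-k_j,j-k_j+1,\dots,j+k_j$, followed by $a_{r+1-k_{r+1},r+1},\dots,a_{r,r+1},a'_{r+1,r+1}$. (The subgroup $W_{\delta(A)}$ does not depend on the choice of the $k_j$.) *)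

(* Defs.v *)
From Stdlib Require Import ZArith List Arith.
Import ListNotations.
Open Scope Z_scope.

Definition DD (d : nat) : Z := 2 * Z.of_nat d + 2.

(* The unique element g of W with g(k) = v k for 1 <= k <= d:
   g(qD + r) = qD + r for r = 0, d+1; qD + v r for 1 <= r <= d;
   (q+1)D - v (D - r) for d+2 <= r <= 2d+1. *)
Definition ext (d : nat) (v : Z -> Z) (x : Z) : Z :=
  let D := DD d in
  let q := x / D in
  let rr := x mod D in
  if rr =? 0 then x
  else if rr <=? Z.of_nat d then q * D + v rr
  else if rr =? Z.of_nat d + 1 then x
  else q * D + D - v (D - rr).

Definition sref (d : nat) (i : nat) : Z -> Z :=
  if Nat.eqb i 0 then ext d (fun k => if k =? 1 then -1 else k)
  else if Nat.eqb i d then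
    ext d (fun k => if k =? Z.of_nat d then Z.of_nat d + 2 else k)
  else
    ext d (fun k => if k =? Z.of_nat i then Z.of_nat i + 1
                    else if k =? Z.of_nat i + 1 then Z.of_nat i else k).

Fixpoint word (d : nat) (l : list nat) : Z -> Z :=
  match l with
  | [] => fun x => x
  | i :: l' => fun x => sref d i (word d l' x)
  end.

Definition in_W (d : nat) (g : Z -> Z) : Prop :=
  (exists ginv : Z -> Z, (forall x, ginv (g x) = x) /\ (forall x, g (ginv x) = x)) /\
  (forall i, g (i + DD d) = g i + DD d) /\
  (forall i, g (- i) = - g i).

Definition is_len (d : nat) (g : Z -> Z) (n : nat) : Prop :=
  (exists l : list nat, (forall i, In i l -> (i <= d)%nat) /\
     length l = n /\ (forall x, word d l x = g x)) /\
  (forall l : list nat, (forall i, In i l -> (i <= d)%nat) ->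
     (forall x, word d l x = g x) -> (n <= length l)%nat).

Definition psum (lam : list nat) (i : nat) : nat :=
  fold_right Nat.add 0%nat (firstn (S i) lam).

Definition in_Lambda (rp d : nat) (lam : list nat) : Prop :=
  length lam = (rp + 2)%nat /\ fold_right Nat.add 0%nat lam = d.

(* s_j is removed from the generators of W_lambda iff j = lambda_{0,i} for
   some 0 <= i <= r' (where length lam = r'+2). *)
Definition excluded (lam : list nat) (j : nat) : Prop :=
  exists i, (i < length lam - 1)%nat /\ psum lam i = j.

Definition in_Wsub (d : nat) (lam : list nat) (h : Z -> Z) : Prop :=
  exists l : list nat,
    (forall i, In i l -> (i <= d)%nat /\ ~ excluded lam i) /\
    (forall x, word d l x = h x).

Definition in_Dl (d : nat) (lam : list nat) (g : Z -> Z) : Prop :=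
  in_W d g /\
  forall w, in_Wsub d lam w ->
    forall a b c : nat, is_len d w a -> is_len d g b ->
      is_len d (fun x => w (g x)) c -> c = (a + b)%nat.

Definition in_Dlm (d : nat) (lam mu : list nat) (g : Z -> Z) : Prop :=
  in_Dl d lam g /\
  exists ginv : Z -> Z, (forall x, ginv (g x) = x) /\ (forall x, g (ginv x) = x)
                        /\ in_Dl d mu ginv.

Definition zrange (a b : Z) : list Z :=
  map (fun t => a + Z.of_nat t) (seq 0 (Z.to_nat (b - a + 1))).

Definition Rbase (d rp : nat) (lam : list nat) (i : nat) : list Z :=
  if Nat.eqb i 0 then zrange (- Z.of_nat (nth 0%nat lam 0%nat)) (Z.of_nat (nth 0%nat lam 0%nat))
  else if Nat.leb i rp then
    zrange (Z.of_nat (psum lam (i - 1)) + 1) (Z.of_nat (psum lam i))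
  else zrange (Z.of_nat d + 1 - Z.of_nat (nth (rp + 1)%nat lam 0%nat))
              (Z.of_nat d + 1 + Z.of_nat (nth (rp + 1)%nat lam 0%nat)).

(* R_i^lambda for all i in Z, via R_{-i} = -R_i and R_{i+2r'+2} = R_i + D *)
Definition Rint (d rp : nat) (lam : list nat) (i : Z) : list Z :=
  let np := 2 * Z.of_nat rp + 2 in
  let q := i / np in
  let rr := i mod np in
  if rr <=? Z.of_nat rp + 1 then
    map (fun x => x + q * DD d) (Rbase d rp lam (Z.to_nat rr))
  else map (fun x => - x + (q + 1) * DD d) (Rbase d rp lam (Z.to_nat (np - rr))).

Definition kappa (d r : nat) (lam : list nat) (g : Z -> Z) (mu : list nat)
  (i j : Z) : nat :=
  length (filter (fun x => existsb (fun y => g y =? x) (Rint d r mu j))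
                 (Rint d r lam i)).

Definition aprime (A : Z -> Z -> nat) (i : Z) : nat := ((A i i - 1) / 2)%nat.

Definition valid_k (r : nat) (A : Z -> Z -> nat) (k : nat -> nat) : Prop :=
  forall (i : Z) (j : nat), (j <= r + 1)%nat -> A i (Z.of_nat j) <> 0%nat ->
    Z.abs (i - Z.of_nat j) <= Z.of_nat (k j).

Definition delta (r : nat) (A : Z -> Z -> nat) (k : nat -> nat) : list nat :=
  (aprime A 0 :: map (fun t => A (Z.of_nat t) 0) (seq 1 (k 0%nat)))
  ++ concat (map (fun j => map (fun t => A (Z.of_nat j - Z.of_nat (k j) + Z.of_nat t)
                                           (Z.of_nat j))
                              (seq 0 (2 * k j + 1)))
                 (seq 1 r))
  ++ (map (fun t => A (Z.of_nat r + 1 - Z.of_nat (k (r + 1)%nat) + Z.of_nat t)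
                      (Z.of_nat r + 1))
          (seq 0 (k (r + 1)%nat))
      ++ [aprime A (Z.of_nat r + 1)]).

(* Main.v *)
Require Import Defs.
From Stdlib Require Import ZArith List Arith Lia Permutation.
Import ListNotations.
Open Scope Z_scope.


Ltac zdestr := repeat match goal with
  | |- context [if (?a =? ?b) then _ else _] => destruct (Z.eqb_spec a b)
  | |- context [if (?a <=? ?b) then _ else _] => destruct (Z.leb_spec a b)
  | |- context [if (?a <? ?b) then _ else _] => destruct (Z.ltb_spec a b)
  end.

Section Basic.
Variable d : nat.
Hypothesis hd : (2 <= d)%nat.

Lemma DD_pos : 0 < DD d.
Proof. unfold DD; lia. Qed.

Lemma decomp x : exists q rr, x = q * DD d + rr /\ 0 <= rr < DD d /\ x / DD d = q /\ x mod DD d = rr.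
Proof.
  exists (x / DD d), (x mod DD d). pose proof DD_pos.
  split; [|split; [apply Z.mod_pos_bound; lia| split; reflexivity]].
  rewrite Z.mul_comm; apply Z.div_mod; lia.
Qed.

Lemma divmod_eq q rr : 0 <= rr < DD d -> (q * DD d + rr) / DD d = q /\ (q * DD d + rr) mod DD d = rr.
Proof.
  intros H. pose proof DD_pos. split.
  - rewrite Z.div_add_l by lia. rewrite Z.div_small by lia. lia.
  - rewrite Z.add_comm. rewrite Z.mod_add by lia. rewrite Z.mod_small by lia. lia.
Qed.

Lemma ext_per v x : ext d v (x + DD d) = ext d v x + DD d.
Proof.
  destruct (decomp x) as [q [rr [Hx [Hr [Hq Hm]]]]].
  assert (x + DD d = (q+1) * DD d + rr) by lia.
  destruct (divmod_eq (q+1) rr Hr) as [E1 E2].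
  unfold ext; cbv zeta. rewrite H, E1, E2, <- H, Hq, Hm. zdestr; lia.
Qed.

Lemma ext_odd v x : ext d v (- x) = - ext d v x.
Proof.
  destruct (decomp x) as [q [rr [Hx [Hr [Hq Hm]]]]].
  unfold ext; cbv zeta. rewrite Hq, Hm.
  destruct (Z.eq_dec rr 0) as [->|Hr0].
  - assert (-x = (-q) * DD d + 0) by lia.
    destruct (divmod_eq (-q) 0) as [E1 E2]. unfold DD in *; lia.
    rewrite H, E1, E2. simpl. lia.
  - assert (-x = (-q-1) * DD d + (DD d - rr)) by lia.
    destruct (divmod_eq (-q-1) (DD d - rr)) as [E1 E2]. lia.
    rewrite H, E1, E2. replace (DD d - (DD d - rr)) with rr by lia.
    subst x. unfold DD in *. zdestr; lia.
Qed.

Lemma ext_val v a : 1 <= a <= Z.of_nat d -> ext d v a = v a.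
Proof.
  intros Ha. destruct (divmod_eq 0 a) as [E1 E2]. unfold DD; lia.
  simpl in E1, E2. unfold ext; cbv zeta. rewrite E1, E2. zdestr; lia.
Qed.

Definition perodd (f : Z -> Z) : Prop :=
  (forall x, f (x + DD d) = f x + DD d) /\ (forall x, f (- x) = - f x).

Lemma perodd_nat f : perodd f -> forall (n : nat) x, f (x + Z.of_nat n * DD d) = f x + Z.of_nat n * DD d.
Proof.
  intros [Hp Ho] n. induction n as [|n IH]; intros x.
  - simpl. rewrite !Z.add_0_r. reflexivity.
  - replace (x + Z.of_nat (S n) * DD d) with ((x + Z.of_nat n * DD d) + DD d) by lia.
    rewrite Hp, IH. lia.
Qed.

Lemma perodd_q f : perodd f -> forall q x, f (x + q * DD d) = f x + q * DD d.
Proof.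
  intros H q x. destruct (Z_le_gt_dec 0 q).
  - replace q with (Z.of_nat (Z.to_nat q)) by lia. apply perodd_nat; auto.
  - pose proof (perodd_nat f H (Z.to_nat (-q)) (x + q * DD d)).
    replace (x + q * DD d + Z.of_nat (Z.to_nat (- q)) * DD d) with x in H0 by lia. lia.
Qed.

Lemma perodd_0 f : perodd f -> f 0 = 0.
Proof. intros [_ Ho]. specialize (Ho 0). simpl in Ho. lia. Qed.

Lemma perodd_mid f : perodd f -> f (Z.of_nat d + 1) = Z.of_nat d + 1.
Proof.
  intros [Hp Ho]. specialize (Hp (- (Z.of_nat d + 1))). rewrite Ho in Hp.
  unfold DD in *. replace (- (Z.of_nat d + 1) + (2 * Z.of_nat d + 2)) with (Z.of_nat d + 1) in Hp by lia.
  lia.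
Qed.

Lemma perodd_eq f g : perodd f -> perodd g ->
  (forall a, 1 <= a <= Z.of_nat d -> f a = g a) -> forall x, f x = g x.
Proof.
  intros Hf Hg H x.
  destruct (decomp x) as [q [rr [Hx [Hr _]]]]. subst x.
  rewrite Z.add_comm, (perodd_q f Hf), (perodd_q g Hg). f_equal.
  destruct (Z.eq_dec rr 0) as [->|]. rewrite perodd_0, perodd_0; auto.
  destruct (Z_le_gt_dec rr (Z.of_nat d)). apply H; lia.
  destruct (Z.eq_dec rr (Z.of_nat d + 1)) as [->|]. rewrite perodd_mid, perodd_mid; auto.
  replace rr with (- (DD d - rr) + DD d) by lia.
  destruct Hf as [Hf1 Hf2], Hg as [Hg1 Hg2].
  rewrite Hf1, Hg1, Hf2, Hg2, H; [lia|]. unfold DD in *; lia.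
Qed.

Lemma ext_perodd v : perodd (ext d v).
Proof. split; [apply ext_per|apply ext_odd]. Qed.

Definition vf (j : nat) (k : Z) : Z :=
  if Nat.eqb j 0 then (if k =? 1 then -1 else k)
  else if Nat.eqb j d then (if k =? Z.of_nat d then Z.of_nat d + 2 else k)
  else (if k =? Z.of_nat j then Z.of_nat j + 1 else if k =? Z.of_nat j + 1 then Z.of_nat j else k).

Lemma sref_ext j x : sref d j x = ext d (vf j) x.
Proof.
  unfold sref, vf. destruct (Nat.eqb j 0); [reflexivity|]. destruct (Nat.eqb j d); reflexivity.
Qed.

Lemma sref_perodd j : perodd (sref d j).
Proof.
  split; intros x; rewrite !sref_ext; [apply ext_per|apply ext_odd].
Qed.

Lemma sref_val j a : 1 <= a <= Z.of_nat d -> sref d j a = vf j a.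
Proof. intros; rewrite sref_ext; apply ext_val; auto. Qed.

Lemma sref_invol j x : (j <= d)%nat -> sref d j (sref d j x) = x.
Proof.
  intros Hj.
  assert (P : perodd (fun x => sref d j (sref d j x))).
  { destruct (sref_perodd j) as [A B]. split; intros y; [rewrite A, A|rewrite B, B]; auto. }
  assert (Pid : perodd (fun x => x)) by (split; intros; lia).
  apply (perodd_eq _ _ P Pid). intros a Ha.
  destruct (sref_perodd j) as [Hp Ho].
  rewrite (sref_val j a Ha). unfold vf.
  destruct (Nat.eqb_spec j 0) as [->|Hj0]; [|destruct (Nat.eqb_spec j d) as [->|Hjd]].
  - destruct (Z.eqb_spec a 1).
    + subst. change (sref d 0 (-1)) with (sref d 0 (- (1))). rewrite Ho. rewrite sref_val by lia. unfold vf. simpl. lia.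
    + rewrite sref_val by lia. unfold vf; simpl. zdestr; lia.
  - destruct (Z.eqb_spec a (Z.of_nat d)).
    + subst. replace (Z.of_nat d + 2) with (- Z.of_nat d + DD d) by (unfold DD; lia).
      rewrite Hp, Ho, sref_val by lia. unfold vf. rewrite Nat.eqb_refl.
      destruct (Nat.eqb_spec d 0); [lia|]. rewrite Z.eqb_refl. unfold DD; lia.
    + rewrite sref_val by lia. unfold vf. rewrite Nat.eqb_refl.
      destruct (Nat.eqb_spec d 0); [lia|]. zdestr; lia.
  - zdestr; (rewrite sref_val by lia; unfold vf;
      destruct (Nat.eqb_spec j 0); [lia|]; destruct (Nat.eqb_spec j d); [lia|]; zdestr; lia).
Qed.

End Basic.


Section WFacts.
Variable d : nat.
Hypothesis hd : (2 <= d)%nat.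

Lemma inW_perodd y : in_W d y -> perodd d y.
Proof. intros [_ [A B]]; split; auto. Qed.

Lemma inW_inv y yi : in_W d y -> (forall x, yi (y x) = x) -> (forall x, y (yi x) = x) -> in_W d yi.
Proof.
  intros [_ [Hp Ho]] H1 H2. split; [exists y; split; auto|split].
  - intros x. rewrite <- (H2 x) at 1. rewrite <- Hp. rewrite H1. reflexivity.
  - intros x. rewrite <- (H2 x) at 1. rewrite <- Ho. rewrite H1. reflexivity.
Qed.

Lemma inW_comp f g : in_W d f -> in_W d g -> in_W d (fun x => f (g x)).
Proof.
  intros [[fi [F1 F2]] [Fp Fo]] [[gi [G1 G2]] [Gp Go]].
  split; [exists (fun x => gi (fi x)); split; intros x; [rewrite F1, G1|rewrite G2, F2]; auto|].
  split; intros x; [rewrite Gp, Fp|rewrite Go, Fo]; auto.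
Qed.

Lemma inW_id : in_W d (fun x => x).
Proof. split; [exists (fun x => x); split; auto|split; intros; lia]. Qed.

Lemma sref_inW j : (j <= d)%nat -> in_W d (sref d j).
Proof.
  intros Hj. destruct (sref_perodd d hd j) as [A B].
  split; [exists (sref d j); split; intros; apply (sref_invol d hd); auto|split; auto].
Qed.

Definition okl (l : list nat) := forall i, In i l -> (i <= d)%nat.

Lemma word_inW l : okl l -> in_W d (word d l).
Proof.
  induction l as [|i l IH]; intros H; simpl.
  - apply inW_id.
  - apply (inW_comp (sref d i) (word d l)). apply sref_inW, H; simpl; auto.
    apply IH. intros k Hk; apply H; simpl; auto.
Qed.

Lemma word_app l1 l2 x : word d (l1 ++ l2) x = word d l1 (word d l2 x).
Proof. induction l1; simpl; congruence. Qed.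

Lemma word_rev l x : okl l -> word d (rev l) (word d l x) = x.
Proof.
  revert x; induction l as [|i l IH]; intros x H; simpl; auto.
  rewrite word_app. simpl. rewrite (sref_invol d hd) by (apply H; simpl; auto).
  apply IH. intros k Hk; apply H; simpl; auto.
Qed.

Lemma okl_rev l : okl l -> okl (rev l).
Proof. intros H i Hi. apply H. apply in_rev; auto. Qed.

Lemma word_rev' l x : okl l -> word d l (word d (rev l) x) = x.
Proof.
  intros H. pose proof (word_rev (rev l) x (okl_rev l H)). rewrite rev_involutive in H0. auto.
Qed.

Lemma is_len_ext f f' n : (forall x, f x = f' x) -> is_len d f n -> is_len d f' n.
Proof.
  intros E [[l [H1 [H2 H3]]] H4]. split.
  - exists l; split; auto; split; auto. intros x; rewrite H3; auto.
  - intros l' Hl' Hw. apply H4; auto. intros x; rewrite Hw; auto.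
Qed.

Lemma is_len_inv y yi n : (forall x, yi (y x) = x) -> (forall x, y (yi x) = x) ->
  is_len d y n -> is_len d yi n.
Proof.
  intros E1 E2 [[l [H1 [H2 H3]]] H4]. split.
  - exists (rev l). split; [apply okl_rev; exact H1|]. split; [rewrite length_rev; auto|].
    intros x. rewrite <- (E2 x) at 1. rewrite <- H3. rewrite word_rev; auto.
  - intros l' Hl' Hw. rewrite <- length_rev. apply H4; [apply okl_rev; exact Hl'|].
    intros x. rewrite <- (E1 x) at 1. rewrite <- Hw, word_rev; auto.
Qed.

End WFacts.


Definition zsum {A} (f : A -> Z) (l : list A) : Z := fold_right (fun a acc => f a + acc) 0 l.

Lemma zsum_cons {A} (f : A -> Z) a l : zsum f (a :: l) = f a + zsum f l.
Proof. reflexivity. Qed.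
Lemma zsum_nil {A} (f : A -> Z) : zsum f [] = 0.
Proof. reflexivity. Qed.

Lemma zsum_app {A} (f : A -> Z) l1 l2 : zsum f (l1 ++ l2) = zsum f l1 + zsum f l2.
Proof. induction l1; simpl; [lia|]. rewrite IHl1; lia. Qed.

Lemma zsum_map {A B} (f : B -> Z) (g : A -> B) l : zsum f (map g l) = zsum (fun x => f (g x)) l.
Proof. induction l; simpl; congruence. Qed.

Lemma zsum_perm {A} (f : A -> Z) l1 l2 : Permutation l1 l2 -> zsum f l1 = zsum f l2.
Proof. induction 1; simpl; lia. Qed.

Lemma zsum_ext_in {A} (f g : A -> Z) l : (forall x, In x l -> f x = g x) -> zsum f l = zsum g l.
Proof.
  induction l; simpl; intros H; auto. rewrite H by auto. rewrite IHl; auto.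
Qed.

Lemma zsum_sub {A} (f g : A -> Z) l : zsum (fun x => f x - g x) l = zsum f l - zsum g l.
Proof. induction l; simpl; lia. Qed.

Lemma zsum_zero {A} (f : A -> Z) l : (forall x, In x l -> f x = 0) -> zsum f l = 0.
Proof. induction l; simpl; intros H; auto. rewrite H, IHl; auto. Qed.

Lemma zsum_filter {A} (f : A -> Z) (p : A -> bool) l :
  (forall x, In x l -> p x = false -> f x = 0) -> zsum f l = zsum f (filter p l).
Proof.
  induction l as [|a l IH]; simpl; intros H; auto.
  destruct (p a) eqn:E; simpl; rewrite IH; auto.
  rewrite H; auto.
Qed.

Lemma zsum_support (f : Z -> Z) L S : NoDup L -> NoDup S -> (forall x, In x S -> In x L) ->
  (forall x, In x L -> ~ In x S -> f x = 0) -> zsum f L = zsum f S.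
Proof.
  intros HL HS Hinc Hz.
  rewrite (zsum_filter f (fun x => if in_dec Z.eq_dec x S then true else false) L).
  - apply zsum_perm. apply NoDup_Permutation; auto. apply NoDup_filter; auto.
    intros x. rewrite filter_In. destruct (in_dec Z.eq_dec x S); split; intros; intuition; discriminate.
  - intros x Hx. destruct (in_dec Z.eq_dec x S); [discriminate|]. intros _; apply Hz; auto.
Qed.

Lemma In_zrange x a b : In x (zrange a b) <-> a <= x <= b.
Proof.
  unfold zrange. rewrite in_map_iff. split.
  - intros [t [<- Ht]]. apply in_seq in Ht. lia.
  - intros H. exists (Z.to_nat (x - a)). split; [lia|]. apply in_seq. lia.
Qed.

Lemma NoDup_zrange a b : NoDup (zrange a b).
Proof.
  unfold zrange. apply NoDup_map_inv with (f := fun x => Z.to_nat (x - a)).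
  rewrite map_map. replace (map _ _) with (seq 0 (Z.to_nat (b - a + 1))). apply seq_NoDup.
  rewrite <- (map_id (seq 0 _)) at 1. apply map_ext_in. intros t Ht. lia.
Qed.

Definition Kc (D a b : Z) : Z := Z.max 0 ((b - 1) / D - a / D).

Section Length.
Variable d : nat.
Hypothesis hd : (2 <= d)%nat.
Local Notation D := (DD d).
Local Notation dz := (Z.of_nat d).

Definition Plist : list Z := zrange 1 dz ++ zrange (dz + 2) (2 * dz + 1).
Definition Plist' : list Z := zrange 1 dz ++ zrange (- dz) (-1).

Definition EL (L : list Z) (y : Z -> Z) : Z :=
  zsum (fun a => zsum (fun b => Kc D (a - b) (y a - y b)) L) L + zsum (fun a => Kc D (2 * a) (2 * y a)) L.

Definition Ef (y : Z -> Z) : Z := EL Plist y.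

Lemma In_Plist a : In a Plist <-> (1 <= a <= dz \/ dz + 2 <= a <= 2 * dz + 1).
Proof. unfold Plist. rewrite in_app_iff, !In_zrange. tauto. Qed.

Lemma In_Plist' a : In a Plist' <-> (1 <= a <= dz \/ - dz <= a <= -1).
Proof. unfold Plist'. rewrite in_app_iff, !In_zrange. tauto. Qed.

Lemma NoDup_app_dis (l1 l2 : list Z) : NoDup l1 -> NoDup l2 -> (forall x, In x l1 -> ~ In x l2) -> NoDup (l1 ++ l2).
Proof.
  induction l1 as [|a l IH]; simpl; intros H1 H2 H; auto.
  inversion H1; subst. constructor.
  - rewrite in_app_iff. intros [?|?]; [contradiction|]. apply (H a); auto.
  - apply IH; auto.
Qed.

Lemma NoDup_Plist : NoDup Plist.
Proof.
  apply NoDup_app_dis; try apply NoDup_zrange. intros x. rewrite !In_zrange. lia.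
Qed.

Lemma NoDup_Plist' : NoDup Plist'.
Proof.
  apply NoDup_app_dis; try apply NoDup_zrange. intros x. rewrite !In_zrange. lia.
Qed.

Lemma Kc_shift a b : Kc D (a + D) (b + D) = Kc D a b.
Proof.
  unfold Kc. pose proof (DD_pos d hd).
  replace (b + D - 1) with ((b - 1) + 1 * D) by lia.
  replace (a + D) with (a + 1 * D) by lia.
  rewrite !Z.div_add by lia. f_equal. lia.
Qed.

Lemma Kc_shift' a b : Kc D (a - D) (b - D) = Kc D a b.
Proof. rewrite <- Kc_shift. f_equal; lia. Qed.

Lemma Kc_m a b a' b' : a' = a - D -> b' = b - D -> Kc D a' b' = Kc D a b.
Proof. intros -> ->; apply Kc_shift'. Qed.
Lemma Kc_p a b a' b' : a' = a + D -> b' = b + D -> Kc D a' b' = Kc D a b.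
Proof. intros -> ->; apply Kc_shift. Qed.

Lemma EL_shift y : perodd d y -> EL Plist y = EL Plist' y.
Proof.
  intros Hy. destruct Hy as [Hp Ho].
  assert (E : Plist = zrange 1 dz ++ map (fun a => a + D) (zrange (- dz) (-1))).
  { unfold Plist, zrange. f_equal. rewrite map_map. replace (Z.to_nat (-1 - - dz + 1)) with (Z.to_nat (2 * dz + 1 - (dz + 2) + 1)) by (f_equal; lia).
    apply map_ext. intros t. unfold DD. lia. }
  unfold EL. rewrite E. unfold Plist'. rewrite !zsum_app, !zsum_map.
  assert (Hin : forall a, zsum (fun b => Kc D (a - b) (y a - y b)) (zrange 1 dz ++ map (fun a => a + D) (zrange (- dz) (-1)))
            = zsum (fun b => Kc D (a - b) (y a - y b)) (zrange 1 dz ++ zrange (- dz) (-1))).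
  { intros a. rewrite !zsum_app, zsum_map. f_equal. apply zsum_ext_in. intros b _.
    rewrite Hp. apply Kc_m; lia. }
  f_equal; [f_equal|f_equal].
  - apply zsum_ext_in; intros a _; apply Hin.
  - apply zsum_ext_in; intros a _. rewrite Hin. rewrite !zsum_app.
    f_equal; apply zsum_ext_in; intros b _; rewrite Hp; apply Kc_p; lia.
  - apply zsum_ext_in. intros a _. rewrite Hp.
    rewrite (Kc_p (2 * a + D) (2 * y a + D) (2 * (a + D)) (2 * (y a + D))) by lia. apply Kc_p; lia.
Qed.


Lemma zsum_reindex (f : Z -> Z) (s : Z -> Z) L : NoDup L -> (forall x, s (s x) = x) ->
  (forall a, In a L -> In (s a) L) -> zsum f L = zsum (fun x => f (s x)) L.
Proof.
  intros HL Hs Hp. rewrite <- (zsum_map f s L). apply zsum_perm. apply Permutation_sym.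
  apply NoDup_Permutation; auto.
  - apply FinFun.Injective_map_NoDup; auto. intros x y E. rewrite <- (Hs x), <- (Hs y), E; auto.
  - intros x. rewrite in_map_iff. split.
    + intros [a [<- Ha]]. auto.
    + intros Hx. exists (s x). split; auto.
Qed.

Lemma Ediff_gen L s y : NoDup L -> (forall x, s (s x) = x) -> (forall a, In a L -> In (s a) L) ->
  EL L (fun x => y (s x)) - EL L y =
  zsum (fun a => zsum (fun b => Kc D (s a - s b) (y a - y b) - Kc D (a - b) (y a - y b)) L) L +
  zsum (fun a => Kc D (2 * s a) (2 * y a) - Kc D (2 * a) (2 * y a)) L.
Proof.
  intros HL Hs Hp. unfold EL.
  rewrite (zsum_reindex _ s L HL Hs Hp). rewrite (zsum_reindex (fun a => Kc D (2 * a) (2 * y (s a))) s L HL Hs Hp).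
  assert (E : forall a, zsum (fun b => Kc D (s a - b) (y (s (s a)) - y (s b))) L =
                        zsum (fun b => Kc D (s a - s b) (y a - y b)) L).
  { intros a. rewrite (zsum_reindex _ s L HL Hs Hp). apply zsum_ext_in. intros b _. rewrite !Hs. reflexivity. }
  rewrite (zsum_ext_in _ _ L (fun a _ => E a)).
  rewrite (zsum_ext_in (fun x => Kc D (2 * s x) (2 * y (s (s x)))) (fun a => Kc D (2 * s a) (2 * y a)) L)
    by (intros; rewrite Hs; auto).
  rewrite (zsum_ext_in (fun a => zsum (fun b => Kc D (s a - s b) (y a - y b) - Kc D (a - b) (y a - y b)) L)
             (fun a => zsum (fun b => Kc D (s a - s b) (y a - y b)) L - zsum (fun b => Kc D (a - b) (y a - y b)) L) L)
    by (intros; apply zsum_sub).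
  rewrite !zsum_sub. lia.
Qed.

Lemma fl_small a : - D <= a < D -> a / D = if a <? 0 then -1 else 0.
Proof.
  intros H. pose proof (DD_pos d hd). destruct (Z.ltb_spec a 0).
  - destruct (divmod_eq d hd (-1) (a + D)) as [E _]; [lia|]. rewrite <- E. f_equal; lia.
  - destruct (divmod_eq d hd 0 a) as [E _]; [lia|]. rewrite <- E. f_equal; lia.
Qed.

Lemma fl_one a : D <= a < 2 * D -> a / D = 1.
Proof.
  intros H. destruct (divmod_eq d hd 1 (a - D)) as [E _]; [lia|]. rewrite <- E. f_equal; lia.
Qed.

Lemma div_sign b : (0 <= (b - 1) / D <-> 0 < b) /\ (1 <= (b - 1) / D <-> D < b).
Proof.
  pose proof (DD_pos d hd). split; split; intros H'.
  - destruct (Z.ltb_spec 0 b); auto. assert ((b - 1) / D < 0) by (apply Z.div_lt_upper_bound; lia). lia.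
  - apply Z.div_pos; lia.
  - destruct (Z.ltb_spec D b); auto. assert ((b - 1) / D < 1) by (apply Z.div_lt_upper_bound; lia). lia.
  - apply Z.div_le_lower_bound; lia.
Qed.

Lemma Kc_np a a' b : - D <= a < 0 -> 0 <= a' < D -> Kc D a b - Kc D a' b = if 0 <? b then 1 else 0.
Proof.
  intros Ha Ha'. unfold Kc. rewrite (fl_small a), (fl_small a') by lia.
  destruct (div_sign b) as [[S1 S2] _].
  destruct (Z.ltb_spec a 0); [|lia]. destruct (Z.ltb_spec a' 0); [lia|].
  destruct (Z.ltb_spec 0 b); lia.
Qed.

Lemma Kc_x a a' b : 0 <= a < D -> D <= a' < 2 * D -> Kc D a' b - Kc D a b = - if D <? b then 1 else 0.
Proof.
  intros Ha Ha'. unfold Kc. rewrite (fl_small a), (fl_one a') by lia.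
  destruct (div_sign b) as [_ [S1 S2]].
  destruct (Z.ltb_spec a 0); [lia|].
  destruct (Z.ltb_spec D b); lia.
Qed.

Lemma Kc_same a a' b : - D <= a < D -> - D <= a' < D -> (a <? 0) = (a' <? 0) -> Kc D a b - Kc D a' b = 0.
Proof.
  intros Ha Ha' E. unfold Kc. rewrite (fl_small a), (fl_small a'), E by lia. lia.
Qed.


Lemma perodd_comp f g : perodd d f -> perodd d g -> perodd d (fun x => f (g x)).
Proof. intros [A B] [C E]; split; intros x; [rewrite C, A|rewrite E, B]; auto. Qed.

Lemma s0_P' a : In a Plist' -> sref d 0 a = if a =? 1 then -1 else if a =? -1 then 1 else a.
Proof.
  rewrite In_Plist'. intros [H|H].
  - rewrite sref_val by lia. unfold vf; simpl. zdestr; lia.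
  - destruct (sref_perodd d hd 0) as [_ Ho].
    replace a with (- (- a)) by lia. rewrite Ho, sref_val by lia. unfold vf; simpl. zdestr; lia.
Qed.

Lemma sd_P a : In a Plist -> sref d d a = if a =? dz then dz + 2 else if a =? dz + 2 then dz else a.
Proof.
  rewrite In_Plist. intros [H|H].
  - rewrite sref_val by lia. unfold vf. rewrite Nat.eqb_refl. destruct (Nat.eqb_spec d 0); [lia|]. zdestr; lia.
  - destruct (sref_perodd d hd d) as [Hp Ho].
    replace a with (- (D - a) + D) by lia. rewrite Hp, Ho, sref_val by (unfold DD; lia). unfold vf.
    rewrite Nat.eqb_refl. destruct (Nat.eqb_spec d 0); [lia|]. unfold DD. zdestr; lia.
Qed.

Lemma smid_P j a : (1 <= j)%nat -> (j < d)%nat -> In a Plist ->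
  sref d j a = if a =? Z.of_nat j then Z.of_nat j + 1 else if a =? Z.of_nat j + 1 then Z.of_nat j
    else if a =? D - Z.of_nat j - 1 then D - Z.of_nat j else if a =? D - Z.of_nat j then D - Z.of_nat j - 1 else a.
Proof.
  intros Hj1 Hj2. rewrite In_Plist. intros [H|H].
  - rewrite sref_val by lia. unfold vf. destruct (Nat.eqb_spec j 0); [lia|]. destruct (Nat.eqb_spec j d); [lia|].
    unfold DD. zdestr; lia.
  - destruct (sref_perodd d hd j) as [Hp Ho].
    replace a with (- (D - a) + D) by lia. rewrite Hp, Ho, sref_val by (unfold DD; lia). unfold vf.
    destruct (Nat.eqb_spec j 0); [lia|]. destruct (Nat.eqb_spec j d); [lia|]. unfold DD. zdestr; lia.
Qed.

Lemma P'_pres a : In a Plist' -> In (sref d 0 a) Plist'.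
Proof. intros H. rewrite s0_P' by auto. rewrite In_Plist' in *. zdestr; lia. Qed.

Lemma Pd_pres a : In a Plist -> In (sref d d a) Plist.
Proof. intros H. rewrite sd_P by auto. rewrite In_Plist in *. zdestr; lia. Qed.

Lemma Pmid_pres j a : (1 <= j)%nat -> (j < d)%nat -> In a Plist -> In (sref d j a) Plist.
Proof. intros H1 H2 H. rewrite smid_P by auto. rewrite In_Plist in *. unfold DD. zdestr; lia. Qed.

Lemma E_change0 y : perodd d y -> y 1 <> 0 ->
  Ef (fun x => y (sref d 0 x)) = Ef y + (if 0 <? y 1 then 2 else -2).
Proof.
  intros Hy H1. unfold Ef.
  rewrite (EL_shift _ (perodd_comp _ _ Hy (sref_perodd d hd 0))), (EL_shift _ Hy).
  pose proof (Ediff_gen Plist' (sref d 0) y NoDup_Plist' (fun x => sref_invol d hd 0 x (Nat.le_0_l d)) P'_pres) as E.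
  assert (Ho : y (-1) = - y 1) by (destruct Hy as [_ Ho]; apply (Ho 1)).
  assert (In1 : In 1 Plist') by (apply In_Plist'; lia).
  assert (In1' : In (-1) Plist') by (apply In_Plist'; lia).
  assert (ND : NoDup [1; -1]) by (repeat constructor; simpl; intuition lia).
  assert (Sinc : forall x, In x [1; -1] -> In x Plist') by (simpl; intros x [<-|[<-|[]]]; auto).
  rewrite (zsum_support _ Plist' [1; -1] NoDup_Plist' ND Sinc) in E.
  2:{ intros a Ha Hn. apply zsum_zero. intros b Hb.
      assert (a <> 1 /\ a <> -1) by (simpl in Hn; intuition).
      rewrite (s0_P' a), (s0_P' b) by auto. rewrite In_Plist' in Ha, Hb.
      apply Kc_same; unfold DD; zdestr; lia. }
  rewrite (zsum_support _ Plist' [1; -1] NoDup_Plist' ND Sinc) in E.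
  2:{ intros a Ha Hn. assert (a <> 1 /\ a <> -1) by (simpl in Hn; intuition).
      rewrite (s0_P' a) by auto. rewrite In_Plist' in Ha. zdestr; lia. }
  rewrite !zsum_cons, !zsum_nil in E.
  rewrite (zsum_support _ Plist' [-1] NoDup_Plist') in E.
  3:{ simpl; intros x [<-|[]]; auto. }
  3:{ intros b Hb Hn. assert (b <> -1) by (simpl in Hn; intuition).
      rewrite (s0_P' 1), (s0_P' b) by auto. rewrite In_Plist' in Hb.
      apply Kc_same; unfold DD; zdestr; lia. }
  2:{ repeat constructor; simpl; intuition. }
  rewrite (zsum_support _ Plist' [1] NoDup_Plist') in E.
  3:{ simpl; intros x [<-|[]]; auto. }
  3:{ intros b Hb Hn. assert (b <> 1) by (simpl in Hn; intuition).
      rewrite (s0_P' (-1)), (s0_P' b) by auto. rewrite In_Plist' in Hb.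
      apply Kc_same; unfold DD; zdestr; lia. }
  2:{ repeat constructor; simpl; intuition. }
  rewrite !zsum_cons, !zsum_nil in E.
  assert (S1 : sref d 0 1 = -1) by (rewrite s0_P' by auto; reflexivity).
  assert (S2 : sref d 0 (-1) = 1) by (rewrite s0_P' by auto; reflexivity).
  rewrite S1, S2, Ho in E.
  pose proof (Kc_np (-1 - 1) (1 - -1) (y 1 - - y 1)) as K1.
  pose proof (Kc_np (-1 - 1) (1 - -1) (- y 1 - y 1)) as K2.
  pose proof (Kc_np (2 * -1) (2 * 1) (2 * y 1)) as K3.
  pose proof (Kc_np (2 * -1) (2 * 1) (2 * - y 1)) as K4.
  assert (B : - D <= -1 - 1 < 0 /\ 0 <= 1 - -1 < D /\ - D <= 2 * -1 < 0 /\ 0 <= 2 * 1 < D) by (unfold DD; lia).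
  destruct B as [B1 [B2 [B3 B4]]].
  specialize (K1 B1 B2); specialize (K2 B1 B2); specialize (K3 B3 B4); specialize (K4 B3 B4).
  revert E K1 K2 K3 K4. zdestr; lia.
Qed.


Lemma Kc_samefl a a' b : a / D = a' / D -> Kc D a b - Kc D a' b = 0.
Proof. intros E. unfold Kc. rewrite E. lia. Qed.

Lemma perodd_mirror y x : perodd d y -> y (D - x) = D - y x.
Proof. intros [Hp Ho]. replace (D - x) with (- x + D) by lia. rewrite Hp, Ho. lia. Qed.

Lemma E_changed y : perodd d y -> y dz <> dz + 1 ->
  Ef (fun x => y (sref d d x)) = Ef y + (if y dz <? dz + 1 then 2 else -2).
Proof.
  intros Hy H1. unfold Ef.
  pose proof (Ediff_gen Plist (sref d d) y NoDup_Plist (fun x => sref_invol d hd d x (Nat.le_refl d)) Pd_pres) as E.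
  assert (Ho : y (dz + 2) = D - y dz) by (rewrite <- perodd_mirror by auto; f_equal; unfold DD; lia).
  assert (In1 : In dz Plist) by (apply In_Plist; lia).
  assert (In1' : In (dz + 2) Plist) by (apply In_Plist; lia).
  assert (ND : NoDup [dz; dz + 2]) by (repeat constructor; simpl; intuition lia).
  assert (Sinc : forall x, In x [dz; dz + 2] -> In x Plist) by (simpl; intros x [<-|[<-|[]]]; auto).
  rewrite (zsum_support _ Plist [dz; dz + 2] NoDup_Plist ND Sinc) in E.
  2:{ intros a Ha Hn. apply zsum_zero. intros b Hb.
      assert (a <> dz /\ a <> dz + 2) by (simpl in Hn; intuition).
      rewrite (sd_P a), (sd_P b) by auto. rewrite In_Plist in Ha, Hb.
      apply Kc_same; unfold DD; zdestr; lia. }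
  rewrite (zsum_support _ Plist [dz; dz + 2] NoDup_Plist ND Sinc) in E.
  2:{ intros a Ha Hn. assert (a <> dz /\ a <> dz + 2) by (simpl in Hn; intuition).
      rewrite (sd_P a) by auto. rewrite In_Plist in Ha. zdestr; lia. }
  rewrite !zsum_cons, !zsum_nil in E.
  rewrite (zsum_support _ Plist [dz + 2] NoDup_Plist) in E.
  3:{ simpl; intros x [<-|[]]; auto. }
  3:{ intros b Hb Hn. assert (b <> dz + 2) by (simpl in Hn; intuition).
      rewrite (sd_P dz), (sd_P b) by auto. rewrite In_Plist in Hb.
      apply Kc_same; unfold DD; zdestr; lia. }
  2:{ repeat constructor; simpl; intuition. }
  rewrite (zsum_support _ Plist [dz] NoDup_Plist) in E.
  3:{ simpl; intros x [<-|[]]; auto. }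
  3:{ intros b Hb Hn. assert (b <> dz) by (simpl in Hn; intuition).
      rewrite (sd_P (dz + 2)), (sd_P b) by auto. rewrite In_Plist in Hb.
      apply Kc_same; unfold DD; zdestr; lia. }
  2:{ repeat constructor; simpl; intuition. }
  rewrite !zsum_cons, !zsum_nil in E.
  assert (S1 : sref d d dz = dz + 2) by (rewrite sd_P by auto; zdestr; lia).
  assert (S2 : sref d d (dz + 2) = dz) by (rewrite sd_P by auto; zdestr; lia).
  rewrite S1, S2, Ho in E.
  pose proof (Kc_np (dz - (dz + 2)) (dz + 2 - dz) (y dz - (D - y dz))) as K1.
  pose proof (Kc_np (dz - (dz + 2)) (dz + 2 - dz) (D - y dz - y dz)) as K2.
  pose proof (Kc_x (2 * dz) (2 * (dz + 2)) (2 * y dz)) as K3.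
  pose proof (Kc_x (2 * dz) (2 * (dz + 2)) (2 * (D - y dz))) as K4.
  assert (B : - D <= dz - (dz + 2) < 0 /\ 0 <= dz + 2 - dz < D /\ 0 <= 2 * dz < D /\ D <= 2 * (dz + 2) < 2 * D)
    by (unfold DD; lia).
  destruct B as [B1 [B2 [B3 B4]]].
  specialize (K1 B1 B2); specialize (K2 B1 B2); specialize (K3 B3 B4); specialize (K4 B3 B4).
  revert E K1 K2 K3 K4. unfold DD. zdestr; lia.
Qed.

Lemma E_changem y j : (1 <= j)%nat -> (j < d)%nat -> perodd d y -> y (Z.of_nat j) <> y (Z.of_nat j + 1) ->
  Ef (fun x => y (sref d j x)) = Ef y + (if y (Z.of_nat j) <? y (Z.of_nat j + 1) then 2 else -2).
Proof.
  intros Hj1 Hj2 Hy H1. unfold Ef. set (jz := Z.of_nat j) in *.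
  assert (Hjz : 1 <= jz < dz) by (unfold jz; lia).
  pose proof (Ediff_gen Plist (sref d j) y NoDup_Plist (fun x => sref_invol d hd j x (Nat.lt_le_incl _ _ Hj2))
     (fun a => Pmid_pres j a Hj1 Hj2)) as E.
  assert (Ho1 : y (D - jz - 1) = D - y (jz + 1)) by (rewrite <- perodd_mirror by auto; f_equal; lia).
  assert (Ho2 : y (D - jz) = D - y jz) by (rewrite <- perodd_mirror by auto; f_equal; lia).
  assert (In1 : In jz Plist) by (apply In_Plist; lia).
  assert (In2 : In (jz + 1) Plist) by (apply In_Plist; lia).
  assert (In3 : In (D - jz - 1) Plist) by (apply In_Plist; unfold DD; lia).
  assert (In4 : In (D - jz) Plist) by (apply In_Plist; unfold DD; lia).
  assert (ND : NoDup [jz; jz + 1; D - jz - 1; D - jz]) by (repeat constructor; simpl; unfold DD; intuition lia).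
  assert (Sinc : forall x, In x [jz; jz + 1; D - jz - 1; D - jz] -> In x Plist)
    by (simpl; intros x [<-|[<-|[<-|[<-|[]]]]]; auto).
  pose proof (smid_P j) as SM. fold jz in SM.
  rewrite (zsum_support _ Plist _ NoDup_Plist ND Sinc) in E.
  2:{ intros a Ha Hn. apply zsum_zero. intros b Hb.
      assert (a <> jz /\ a <> jz + 1 /\ a <> D - jz - 1 /\ a <> D - jz) by (simpl in Hn; intuition).
      rewrite (SM a), (SM b) by auto. rewrite In_Plist in Ha, Hb.
      apply Kc_same; unfold DD in *; zdestr; lia. }
  rewrite (zsum_zero (fun a => Kc D (2 * sref d j a) (2 * y a) - Kc D (2 * a) (2 * y a))) in E.
  2:{ intros a Ha. apply Kc_samefl. rewrite (SM a) by auto. rewrite In_Plist in Ha.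
      destruct Ha as [Ha|Ha].
      - rewrite (fl_small (2 * a)) by (unfold DD; lia). unfold DD in *. zdestr; rewrite fl_small; unfold DD; zdestr; lia.
      - rewrite (fl_one (2 * a)) by (unfold DD; lia). unfold DD in *. zdestr; rewrite fl_one; unfold DD; lia. }
  rewrite !zsum_cons, !zsum_nil in E.
  assert (NDi : forall c : Z, NoDup [c]) by (intros; constructor; [intros []|constructor]).
  assert (Sinci : forall c, In c Plist -> forall x, In x [c] -> In x Plist) by (simpl; intros c Hc x [<-|[]]; auto).
  rewrite (zsum_support _ Plist [jz + 1] NoDup_Plist (NDi _) (Sinci _ In2)) in E.
  2:{ intros b Hb Hn. assert (b <> jz + 1) by (simpl in Hn; intuition).
      rewrite (SM jz), (SM b) by auto. rewrite In_Plist in Hb.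
      apply Kc_same; unfold DD in *; zdestr; lia. }
  rewrite (zsum_support _ Plist [jz] NoDup_Plist (NDi _) (Sinci _ In1)) in E.
  2:{ intros b Hb Hn. assert (b <> jz) by (simpl in Hn; intuition).
      rewrite (SM (jz + 1)), (SM b) by auto. rewrite In_Plist in Hb.
      apply Kc_same; unfold DD in *; zdestr; lia. }
  rewrite (zsum_support _ Plist [D - jz] NoDup_Plist (NDi _) (Sinci _ In4)) in E.
  2:{ intros b Hb Hn. assert (b <> D - jz) by (simpl in Hn; intuition).
      rewrite (SM (D - jz - 1)), (SM b) by auto. rewrite In_Plist in Hb.
      apply Kc_same; unfold DD in *; zdestr; lia. }
  rewrite (zsum_support _ Plist [D - jz - 1] NoDup_Plist (NDi _) (Sinci _ In3)) in E.
  2:{ intros b Hb Hn. assert (b <> D - jz - 1) by (simpl in Hn; intuition).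
      rewrite (SM (D - jz)), (SM b) by auto. rewrite In_Plist in Hb.
      apply Kc_same; unfold DD in *; zdestr; lia. }
  rewrite !zsum_cons, !zsum_nil in E.
  assert (S1 : sref d j jz = jz + 1) by (rewrite SM by auto; zdestr; lia).
  assert (S2 : sref d j (jz + 1) = jz) by (rewrite SM by auto; zdestr; lia).
  assert (S3 : sref d j (D - jz - 1) = D - jz) by (rewrite SM by auto; unfold DD in *; zdestr; lia).
  assert (S4 : sref d j (D - jz) = D - jz - 1) by (rewrite SM by auto; unfold DD in *; zdestr; lia).
  rewrite S1, S2, S3, S4, Ho1, Ho2 in E.
  pose proof (Kc_np (jz - (jz + 1)) (jz + 1 - jz) (y jz - y (jz + 1))) as K1.
  pose proof (Kc_np (jz - (jz + 1)) (jz + 1 - jz) (y (jz + 1) - y jz)) as K2.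
  pose proof (Kc_np (D - jz - 1 - (D - jz)) (D - jz - (D - jz - 1)) (D - y (jz + 1) - (D - y jz))) as K3.
  pose proof (Kc_np (D - jz - 1 - (D - jz)) (D - jz - (D - jz - 1)) (D - y jz - (D - y (jz + 1)))) as K4.
  assert (B : - D <= jz - (jz + 1) < 0 /\ 0 <= jz + 1 - jz < D /\ - D <= D - jz - 1 - (D - jz) < 0 /\ 0 <= D - jz - (D - jz - 1) < D) by (unfold DD; lia).
  destruct B as [B1 [B2 [B3 B4]]].
  specialize (K1 B1 B2); specialize (K2 B1 B2); specialize (K3 B3 B4); specialize (K4 B3 B4).
  replace (jz + 1 - (D - jz)) with (jz + 1 - (D - jz)) in E by lia.
  revert E K1 K2 K3 K4. zdestr; lia.
Qed.

End Length.


Lemma fin_dec (P : nat -> Prop) (Pd : forall j, {P j} + {~ P j}) n :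
  (exists j, (j <= n)%nat /\ ~ P j) \/ (forall j, (j <= n)%nat -> P j).
Proof.
  induction n as [|n IH].
  - destruct (Pd 0%nat); [right; intros j Hj; replace j with 0%nat by lia; auto|left; exists 0%nat; split; auto].
  - destruct IH as [[j [Hj HP]]|IH]; [left; exists j; split; auto|].
    destruct (Pd (S n)); [right; intros j Hj; destruct (Nat.eq_dec j (S n)); [subst; auto|apply IH; lia]|].
    left; exists (S n); split; auto.
Qed.

Section Len.
Variable d : nat.
Hypothesis hd : (2 <= d)%nat.
Local Notation D := (DD d).
Local Notation dz := (Z.of_nat d).

Definition va (j : nat) : Z := if Nat.eqb j 0 then -1 else Z.of_nat j.
Definition vb (j : nat) : Z := if Nat.eqb j 0 then 1 else if Nat.eqb j d then dz + 2 else Z.of_nat j + 1.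

Lemma inW_inj y a b : in_W d y -> y a = y b -> a = b.
Proof. intros [[yi [H1 _]] _] E. rewrite <- (H1 a), <- (H1 b), E. reflexivity. Qed.

Lemma E_change y j : (j <= d)%nat -> in_W d y ->
  Ef d (fun x => y (sref d j x)) = Ef d y + (if y (va j) <? y (vb j) then 2 else -2).
Proof.
  intros Hj Hy. pose proof (inW_perodd d y Hy) as Hp.
  unfold va, vb. destruct (Nat.eqb_spec j 0) as [->|Hj0]; [|destruct (Nat.eqb_spec j d) as [->|Hjd]].
  - rewrite (E_change0 d hd y Hp).
    + assert (y (-1) = - y 1) by (destruct Hp as [_ Ho]; apply (Ho 1)). rewrite H.
      zdestr; lia.
    + intros E. rewrite <- (perodd_0 d hd y Hp) in E. apply (inW_inj y) in E; auto. lia.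
  - rewrite (E_changed d hd y Hp).
    + assert (y (dz + 2) = D - y dz) by (rewrite <- perodd_mirror by auto; f_equal; unfold DD; lia).
      rewrite H. unfold DD in *. zdestr; lia.
    + intros E. rewrite <- (perodd_mid d hd y Hp) in E. apply (inW_inj y) in E; auto. lia.
  - apply E_changem; auto; try lia. intros E. apply (inW_inj y) in E; auto. lia.
Qed.

Lemma Kc_refl a : Kc D a a = 0.
Proof.
  unfold Kc. pose proof (DD_pos d hd). assert ((a - 1) / D <= a / D) by (apply Z.div_le_mono; lia). lia.
Qed.

Lemma Kc_nonneg a b : 0 <= Kc D a b.
Proof. unfold Kc; lia. Qed.

Lemma zsum_nonneg {A} (f : A -> Z) l : (forall x, 0 <= f x) -> 0 <= zsum f l.
Proof. intros H; induction l; simpl; auto. lia. specialize (H a); lia. Qed.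

Lemma Ef_nonneg y : 0 <= Ef d y.
Proof.
  unfold Ef, EL. pose proof (zsum_nonneg (fun a => zsum (fun b => Kc D (a - b) (y a - y b)) (Plist d)) (Plist d)).
  pose proof (zsum_nonneg (fun a => Kc D (2 * a) (2 * y a)) (Plist d)).
  assert (0 <= zsum (fun a => zsum (fun b => Kc D (a - b) (y a - y b)) (Plist d)) (Plist d)).
  { apply H. intros x. apply zsum_nonneg. intros; apply Kc_nonneg. }
  assert (0 <= zsum (fun a => Kc D (2 * a) (2 * y a)) (Plist d)) by (apply H0; intros; apply Kc_nonneg).
  lia.
Qed.

Lemma Ef_id : Ef d (fun x => x) = 0.
Proof.
  unfold Ef, EL. rewrite !zsum_zero; auto; intros; [apply Kc_refl|]. apply zsum_zero. intros; apply Kc_refl.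
Qed.

Lemma Ef_ext y y' : (forall x, y x = y' x) -> Ef d y = Ef d y'.
Proof.
  intros E. unfold Ef, EL. f_equal.
  - apply zsum_ext_in; intros a _; apply zsum_ext_in; intros b _; rewrite !E; auto.
  - apply zsum_ext_in; intros a _; rewrite !E; auto.
Qed.

Lemma word_snoc l j x : word d (l ++ [j]) x = word d l (sref d j x).
Proof. rewrite word_app. reflexivity. Qed.

Lemma Ef_word l : okl d l -> Ef d (word d l) <= 2 * Z.of_nat (length l).
Proof.
  induction l as [|j l IH] using rev_ind; intros H.
  - simpl. rewrite Ef_id. lia.
  - rewrite (Ef_ext _ (fun x => word d l (sref d j x))) by (intros; apply word_snoc).
    assert (Hl : okl d l) by (intros i Hi; apply H; apply in_app_iff; auto).
    assert (Hj : (j <= d)%nat) by (apply H; apply in_app_iff; simpl; auto).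
    rewrite (E_change (word d l) j Hj (word_inW d hd l Hl)).
    rewrite length_app. cbn [length]. specialize (IH Hl). destruct (_ <? _); lia.
Qed.

Lemma ascent_id y : in_W d y -> (forall j, (j <= d)%nat -> y (va j) < y (vb j)) -> forall x, y x = x.
Proof.
  intros Hy H. pose proof (inW_perodd d y Hy) as Hp.
  assert (H0 := H 0%nat (Nat.le_0_l _)). unfold va, vb in H0. simpl in H0.
  assert (y (-1) = - y 1) by (destruct Hp as [_ Ho]; apply (Ho 1)).
  assert (Hd := H d (Nat.le_refl _)). unfold va, vb in Hd.
  destruct (Nat.eqb_spec d 0); [lia|]. rewrite Nat.eqb_refl in Hd.
  assert (y (dz + 2) = D - y dz) by (rewrite <- perodd_mirror by auto; f_equal; unfold DD; lia).
  assert (Hm : forall k, (1 <= k < d)%nat -> y (Z.of_nat k) < y (Z.of_nat k + 1)).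
  { intros k Hk. specialize (H k ltac:(lia)). unfold va, vb in H.
    destruct (Nat.eqb_spec k 0); [lia|]. destruct (Nat.eqb_spec k d); [lia|]. auto. }
  assert (Lo : forall k, (k < d)%nat -> Z.of_nat k + 1 <= y (Z.of_nat k + 1)).
  { induction k; intros Hk. simpl. lia. specialize (IHk ltac:(lia)). specialize (Hm (S k) ltac:(lia)).
    replace (Z.of_nat (S k)) with (Z.of_nat k + 1) in * by lia. lia. }
  assert (Hi : forall k, (k < d)%nat -> y (dz - Z.of_nat k) <= dz - Z.of_nat k).
  { induction k; intros Hk. simpl. rewrite Z.sub_0_r. unfold DD in *. lia. specialize (IHk ltac:(lia)).
    specialize (Hm (d - S k)%nat ltac:(lia)).
    replace (Z.of_nat (d - S k)) with (dz - Z.of_nat (S k)) in Hm by lia.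
    replace (dz - Z.of_nat (S k) + 1) with (dz - Z.of_nat k) in Hm by lia. lia. }
  apply (perodd_eq d hd y (fun x => x) Hp); [split; intros; lia|].
  intros a Ha. specialize (Lo (Z.to_nat (a - 1)) ltac:(lia)). specialize (Hi (Z.to_nat (dz - a)) ltac:(lia)).
  replace (Z.of_nat (Z.to_nat (a - 1)) + 1) with a in Lo by lia.
  replace (dz - Z.of_nat (Z.to_nat (dz - a))) with a in Hi by lia. lia.
Qed.

Lemma word_exists y : in_W d y -> exists l, okl d l /\ (forall x, word d l x = y x) /\ Ef d y = 2 * Z.of_nat (length l).
Proof.
  intros Hy. remember (Z.to_nat (Ef d y)) as n eqn:En. revert y Hy En.
  induction n as [n IH] using (well_founded_induction lt_wf). intros y Hy En.
  destruct (fin_dec (fun j => y (va j) < y (vb j)) (fun j => Z_lt_dec _ _) d) as [[j [Hj Hdesc]]|Hasc].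
  - set (z := fun x => y (sref d j x)).
    assert (Hz : in_W d z) by (apply (inW_comp d y (sref d j) Hy (sref_inW d hd j Hj))).
    pose proof (E_change y j Hj Hy) as E. fold z in E.
    destruct (Z.ltb_spec (y (va j)) (y (vb j))); [lia|].
    pose proof (Ef_nonneg z).
    destruct (IH (Z.to_nat (Ef d z)) ltac:(lia) z Hz eq_refl) as [l [Hl [Hw HE]]].
    exists (l ++ [j]). split; [intros i Hi; apply in_app_iff in Hi; destruct Hi as [Hi|[<-|[]]]; auto|].
    split.
    + intros x. rewrite word_snoc, Hw. unfold z. rewrite (sref_invol d hd); auto.
    + rewrite length_app. cbn [length]. lia.
  - exists []. split; [intros i []|]. split; [intros x; simpl; symmetry; apply ascent_id; auto|].
    rewrite (Ef_ext _ (fun x => x)) by (apply ascent_id; auto). rewrite Ef_id. reflexivity.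
Qed.


Lemma len_Ef y : in_W d y -> exists n, is_len d y n /\ Ef d y = 2 * Z.of_nat n.
Proof.
  intros Hy. destruct (word_exists y Hy) as [l [Hl [Hw HE]]].
  exists (length l). split; auto. split; [exists l; auto|].
  intros l' Hl' Hw'. pose proof (Ef_word l' Hl').
  rewrite (Ef_ext _ y Hw') in H. lia.
Qed.

Lemma is_len_uniq y n m : is_len d y n -> is_len d y m -> n = m.
Proof.
  intros [[l [Hl [Hn Hw]]] Hmin] [[l' [Hl' [Hm Hw']]] Hmin'].
  specialize (Hmin l' Hl' Hw'). specialize (Hmin' l Hl Hw). lia.
Qed.

Lemma Dl_asc mu g ginv : in_W d g -> (forall x, ginv (g x) = x) -> (forall x, g (ginv x) = x) ->
  in_Dl d mu ginv -> forall j, (j <= d)%nat -> ~ excluded mu j -> g (va j) < g (vb j).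
Proof.
  intros Hg G1 G2 [Hgi HD] j Hj Hex.
  assert (Hw : in_Wsub d mu (sref d j)).
  { exists [j]. split; [intros i [<-|[]]; auto|]. intros x; reflexivity. }
  destruct (len_Ef (sref d j) (sref_inW d hd j Hj)) as [a [Ha Ea]].
  assert (Ea' : Ef d (sref d j) = 2).
  { rewrite (Ef_ext _ (fun x => (fun z => z) (sref d j x))) by auto.
    rewrite (E_change (fun z => z) j Hj (inW_id d hd)), Ef_id. unfold va, vb.
    destruct (Nat.eqb_spec j 0); [reflexivity|]. destruct (Nat.eqb_spec j d); zdestr; lia. }
  destruct (len_Ef g Hg) as [b [Hb Eb]].
  pose proof (is_len_inv d hd g ginv b G1 G2 Hb) as Hb'.
  set (z := fun x => g (sref d j x)).
  assert (Hz : in_W d z) by (apply (inW_comp d g (sref d j) Hg (sref_inW d hd j Hj))).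
  destruct (len_Ef z Hz) as [c [Hc Ec]].
  assert (Hc' : is_len d (fun x => sref d j (ginv x)) c).
  { apply (is_len_inv d hd z); auto; intros x; unfold z.
    - rewrite G1. apply (sref_invol d hd); auto.
    - rewrite (sref_invol d hd j) by auto. apply G2. }
  specialize (HD _ Hw a b c Ha Hb' Hc').
  pose proof (E_change g j Hj Hg) as E. fold z in E.
  destruct (Z.ltb_spec (g (va j)) (g (vb j))); auto. lia.
Qed.

End Len.


Definition lsum (l : list nat) : nat := fold_right Nat.add 0%nat l.

Lemma psum_nil i : psum [] i = 0%nat.
Proof. reflexivity. Qed.
Lemma psum_cons0 a l : psum (a :: l) 0 = a.
Proof. unfold psum. simpl. lia. Qed.
Lemma psum_consS a l i : psum (a :: l) (S i) = (a + psum l i)%nat.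
Proof. reflexivity. Qed.

Lemma psum_S l i : (psum l i <= psum l (S i))%nat.
Proof.
  revert i; induction l as [|a l IH]; intros i; [rewrite ?psum_nil; simpl; lia|].
  destruct i; [rewrite psum_cons0, psum_consS; lia|]. rewrite !psum_consS. specialize (IH i). lia.
Qed.

Lemma psum_mono l i j : (i <= j)%nat -> (psum l i <= psum l j)%nat.
Proof. induction 1; auto. pose proof (psum_S l m). lia. Qed.

Lemma psum_le_sum l i : (psum l i <= lsum l)%nat.
Proof.
  revert i; induction l as [|a l IH]; intros i; [rewrite ?psum_nil; simpl; lia|].
  destruct i; [rewrite psum_cons0; simpl; lia|]. rewrite psum_consS. simpl. specialize (IH i). lia.
Qed.

Lemma psum_last l i : (length l <= S i)%nat -> psum l i = lsum l.
Proof. intros H. unfold psum, lsum. rewrite firstn_all2; auto. Qed.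

Lemma length_filter_le {A} (p : A -> bool) l : (length (filter p l) <= length l)%nat.
Proof. induction l; simpl; auto. destruct (p a); simpl; lia. Qed.

Lemma length_filter_all {A} (p : A -> bool) l : (forall x, In x l -> p x = true) -> length (filter p l) = length l.
Proof. induction l; simpl; intros H; auto. rewrite H by auto. simpl. rewrite IHl; auto. Qed.

Lemma length_filter_none {A} (p : A -> bool) l : (forall x, In x l -> p x = false) -> length (filter p l) = 0%nat.
Proof. induction l; simpl; intros H; auto. rewrite H by auto. apply IHl; auto. Qed.

Lemma length_filter_or {A} (p q : A -> bool) l : (forall x, In x l -> p x = true -> q x = false) ->
  length (filter (fun x => orb (p x) (q x)) l) = (length (filter p l) + length (filter q l))%nat.
Proof.
  induction l; simpl; intros H; auto.
  destruct (p a) eqn:E1; destruct (q a) eqn:E2; simpl; try rewrite IHl; auto.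
  rewrite H in E2; auto; discriminate.
Qed.

Lemma length_filter_ext {A} (p q : A -> bool) l : (forall x, In x l -> p x = q x) ->
  length (filter p l) = length (filter q l).
Proof. intros H. rewrite (filter_ext_in p q l H). reflexivity. Qed.

Lemma classic_excl_gen (nu : list nat) (j : nat) : excluded nu j \/ ~ excluded nu j.
Proof.
  unfold excluded.
  assert (Pd : forall i, {~ ((i < length nu - 1)%nat /\ psum nu i = j)} + {~ ~ ((i < length nu - 1)%nat /\ psum nu i = j)}).
  { intros i. destruct (lt_dec i (length nu - 1)); destruct (Nat.eq_dec (psum nu i) j);
    [right; tauto|left; tauto|left; tauto|left; tauto]. }
  destruct (fin_dec _ Pd (length nu)) as [[i [_ Hi]]|H].
  - left. exists i. destruct (lt_dec i (length nu - 1)); destruct (Nat.eq_dec (psum nu i) j); tauto.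
  - right. intros [i [Hi1 Hi2]]. apply (H i); [lia|]. auto.
Qed.

Lemma in_W_ext d y y' : (forall x, y x = y' x) -> in_W d y' -> in_W d y.
Proof.
  intros E [[yi [H1 H2]] [Hp Ho]]. split; [exists yi; split; intros x; rewrite ?E; auto|].
  split; intros x; rewrite !E; auto.
Qed.

Section Beta.
Variable d : nat.
Hypothesis hd : (2 <= d)%nat.
Local Notation D := (DD d).
Local Notation dz := (Z.of_nat d).

Variable nu : list nat.
Hypothesis Hsum : lsum nu = d.
Hypothesis Hlen : (2 <= length nu)%nat.

Let n := (length nu - 1)%nat.
Definition bcount (t : Z) : Z :=
  Z.of_nat (length (filter (fun i => Z.of_nat (psum nu i) <? t) (seq 0 (length nu - 1)))).
Definition npz : Z := 2 * Z.of_nat (length nu - 1).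
Definition beta (x : Z) : Z :=
  let q := x / D in let rr := x mod D in
  if rr <=? dz + 1 then q * npz + bcount rr else (q + 1) * npz - bcount (D - rr).

Lemma bcount_low t : t <= 0 -> bcount t = 0.
Proof.
  intros H. unfold bcount. rewrite length_filter_none; auto. intros x _. apply Z.ltb_ge. lia.
Qed.

Lemma bcount_high t : dz + 1 <= t -> bcount t = Z.of_nat (length nu - 1).
Proof.
  intros H. unfold bcount. rewrite length_filter_all. rewrite length_seq; auto.
  intros x _. apply Z.ltb_lt. pose proof (psum_le_sum nu x). lia.
Qed.

Lemma bcount_mono t t' : t <= t' -> bcount t <= bcount t'.
Proof.
  intros H. unfold bcount. apply Nat2Z.inj_le.
  induction (seq 0 (length nu - 1)); simpl; auto.
  destruct (Z.ltb_spec (Z.of_nat (psum nu a)) t); destruct (Z.ltb_spec (Z.of_nat (psum nu a)) t'); simpl; lia.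
Qed.

Lemma bcount_step (j : nat) : bcount (Z.of_nat j + 1) = bcount (Z.of_nat j) <-> ~ excluded nu j.
Proof.
  unfold bcount.
  rewrite (length_filter_ext _ (fun i => orb (Z.of_nat (psum nu i) <? Z.of_nat j) (Nat.eqb (psum nu i) j))).
  2:{ intros x _. destruct (Z.ltb_spec (Z.of_nat (psum nu x)) (Z.of_nat j + 1));
      destruct (Z.ltb_spec (Z.of_nat (psum nu x)) (Z.of_nat j)); destruct (Nat.eqb_spec (psum nu x) j); simpl; lia. }
  rewrite length_filter_or.
  2:{ intros x _ E. apply Z.ltb_lt in E. apply Nat.eqb_neq. lia. }
  split.
  - intros E [i [Hi Hp]]. assert (length (filter (fun i => Nat.eqb (psum nu i) j) (seq 0 (length nu - 1))) <> 0%nat).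
    { assert (In i (filter (fun i => Nat.eqb (psum nu i) j) (seq 0 (length nu - 1)))).
      { apply filter_In. split; [apply in_seq; lia|]. apply Nat.eqb_eq; auto. }
      intros Hl. apply length_zero_iff_nil in Hl. rewrite Hl in H. contradiction. }
    lia.
  - intros Hn. rewrite (length_filter_none (fun i => Nat.eqb (psum nu i) j)); [lia|].
    intros x Hx. apply Nat.eqb_neq. intros E. apply Hn. exists x. split; auto. apply in_seq in Hx. lia.
Qed.

Lemma bcount_le t m : (m < length nu - 1)%nat -> (bcount t <= Z.of_nat m <-> t <= Z.of_nat (psum nu m)).
Proof.
  intros Hm. unfold bcount.
  replace (length nu - 1)%nat with (S m + (length nu - 1 - S m))%nat by lia.
  rewrite seq_app, filter_app, length_app. split.
  - intros H. destruct (Z_le_gt_dec t (Z.of_nat (psum nu m))); auto.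
    rewrite (length_filter_all _ (seq 0 (S m))) in H. rewrite length_seq in H. lia.
    intros x Hx. apply in_seq in Hx. apply Z.ltb_lt. pose proof (psum_mono nu x m). lia.
  - intros H. rewrite (length_filter_none _ (seq (0 + S m) _)).
    pose proof (length_filter_le (fun i => Z.of_nat (psum nu i) <? t) (seq 0 (S m))). rewrite length_seq in H0.
    2:{ intros x Hx. apply in_seq in Hx. apply Z.ltb_ge. pose proof (psum_mono nu m x). lia. }
    assert (length (filter (fun i => (Z.of_nat (psum nu i) <? t)%Z) (seq 0 (S m))) <= m)%nat.
    { rewrite seq_S, filter_app. rewrite length_app. simpl.
      replace (Z.of_nat (psum nu m) <? t) with false by (symmetry; apply Z.ltb_ge; lia). simpl.
      pose proof (length_filter_le (fun i => Z.of_nat (psum nu i) <? t) (seq 0 m)). rewrite length_seq in H1. lia. }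
    lia.
Qed.


Lemma bcount_range t : 0 <= bcount t <= Z.of_nat (length nu - 1).
Proof.
  unfold bcount. pose proof (length_filter_le (fun i => Z.of_nat (psum nu i) <? t) (seq 0 (length nu - 1))).
  rewrite length_seq in H. lia.
Qed.

Definition cfun (rr : Z) : Z := if rr <=? dz + 1 then bcount rr else npz - bcount (D - rr).

Lemma beta_qr q rr : 0 <= rr < D -> beta (q * D + rr) = q * npz + cfun rr.
Proof.
  intros H. destruct (divmod_eq d hd q rr H) as [E1 E2]. unfold beta, cfun. cbv zeta. rewrite E1, E2.
  zdestr; lia.
Qed.

Lemma cfun_range rr : 0 <= cfun rr <= npz.
Proof. unfold cfun, npz. pose proof (bcount_range rr). pose proof (bcount_range (D - rr)). zdestr; lia. Qed.

Lemma cfun_mono rr rr' : 0 <= rr -> rr <= rr' -> rr' < D -> cfun rr <= cfun rr'.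
Proof.
  intros H1 H2 H3. unfold cfun, npz. pose proof (bcount_range rr). pose proof (bcount_range (D - rr')).
  pose proof (bcount_mono rr rr' H2). assert (HH : D - rr' <= D - rr) by lia. pose proof (bcount_mono _ _ HH).
  zdestr; lia.
Qed.

Lemma beta_shift x q : beta (x + q * D) = beta x + q * npz.
Proof.
  destruct (decomp d hd x) as [q0 [rr [Hx [Hr _]]]]. subst x.
  replace (q0 * D + rr + q * D) with ((q0 + q) * D + rr) by lia.
  rewrite !beta_qr by auto. lia.
Qed.

Lemma beta_base t : 0 <= t <= dz + 1 -> beta t = bcount t.
Proof.
  intros H. replace t with (0 * D + t) at 1 by lia. rewrite beta_qr by (unfold DD; lia).
  unfold cfun. zdestr; lia.
Qed.

Lemma beta_odd x : beta (- x) = - beta x.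
Proof.
  destruct (decomp d hd x) as [q [rr [Hx [Hr _]]]]. subst x.
  destruct (Z.eq_dec rr 0) as [->|Hr0].
  - replace (- (q * D + 0)) with ((-q) * D + 0) by lia. rewrite !beta_qr by lia.
    unfold cfun. rewrite bcount_low by lia. zdestr; lia.
  - replace (- (q * D + rr)) with ((-q-1) * D + (D - rr)) by lia. rewrite !beta_qr by lia.
    unfold cfun, npz. replace (D - (D - rr)) with rr by lia.
    zdestr; try (unfold DD in *; lia).
    assert (rr = dz + 1) by (unfold DD in *; lia). subst rr.
    rewrite !bcount_high by (unfold DD; lia). lia.
Qed.

Lemma beta_mirror x : beta (D - x) = npz - beta x.
Proof.
  replace (D - x) with (- x + 1 * D) by lia. rewrite beta_shift, beta_odd. lia.
Qed.

Lemma beta_mono x x' : x <= x' -> beta x <= beta x'.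
Proof.
  intros H. destruct (decomp d hd x) as [q [rr [Hx [Hr _]]]]. destruct (decomp d hd x') as [q' [rr' [Hx' [Hr' _]]]].
  subst x x'. rewrite !beta_qr by auto.
  assert (q <= q') by nia.
  destruct (Z.eq_dec q q') as [->|Hq].
  - assert (rr <= rr') by lia. pose proof (cfun_mono rr rr'). lia.
  - pose proof (cfun_range rr). pose proof (cfun_range rr'). assert (q + 1 <= q') by lia.
    assert ((q + 1) * npz <= q' * npz) by (apply Z.mul_le_mono_nonneg_r; unfold npz; lia). lia.
Qed.

Lemma va_vb_range j : (j <= d)%nat -> va j < vb d j.
Proof. intros. unfold va, vb. destruct (Nat.eqb_spec j 0); [lia|]. destruct (Nat.eqb_spec j d); lia. Qed.

Lemma excl_beta j : (j <= d)%nat -> (excluded nu j <-> beta (va j) <> beta (vb d j)).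
Proof.
  intros Hj. pose proof (bcount_step j) as BS. unfold va, vb.
  destruct (Nat.eqb_spec j 0) as [->|Hj0]; [|destruct (Nat.eqb_spec j d) as [->|Hjd]].
  - change (-1) with (- (1)). rewrite beta_odd, beta_base by lia. simpl in BS.
    rewrite (bcount_low 0) in BS by lia. split; intros H.
    + intros E. apply BS; auto; lia.
    + destruct (classic_excl_gen nu 0%nat) as [?|Hn]; auto. exfalso. apply H. assert (bcount 1 = 0) by (apply BS; auto). lia.
  - replace (dz + 2) with (D - dz) by (unfold DD; lia). rewrite beta_mirror, beta_base by lia.
    rewrite (bcount_high (dz + 1)) in BS by lia. unfold npz. split; intros H.
    + intros E. apply BS; auto; lia.
    + destruct (classic_excl_gen nu d) as [?|Hn]; auto. exfalso. apply H. assert (Z.of_nat (length nu - 1) = bcount dz) by (apply BS; auto). lia.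
  - rewrite !beta_base by lia. split; intros H.
    + intros E. apply BS; auto; lia.
    + destruct (classic_excl_gen nu j) as [?|Hn]; auto. exfalso. apply H. symmetry. apply BS; auto.
Qed.


Lemma beta_sref j : (j <= d)%nat -> ~ excluded nu j -> forall x, beta (sref d j x) = beta x.
Proof.
  intros Hj Hn.
  assert (E : beta (va j) = beta (vb d j)).
  { destruct (Z.eq_dec (beta (va j)) (beta (vb d j))); auto. exfalso. apply Hn. apply excl_beta; auto. }
  assert (U : forall u, 1 <= u <= dz -> beta (sref d j u) = beta u).
  { intros u Hu. rewrite sref_val by auto. unfold vf. unfold va, vb in E.
    destruct (Nat.eqb_spec j 0) as [->|Hj0]; [|destruct (Nat.eqb_spec j d) as [->|Hjd]].
    - zdestr; auto. subst. auto.
    - zdestr; auto. subst. auto.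
    - zdestr; subst; auto. }
  destruct (sref_perodd d hd j) as [Sp So].
  intros x. destruct (decomp d hd x) as [q [t [Hx [Ht _]]]]. subst x.
  rewrite Z.add_comm, (perodd_q d hd (sref d j) (sref_perodd d hd j)), !beta_shift. f_equal.
  destruct (Z.eq_dec t 0) as [->|]. rewrite (perodd_0 d hd _ (sref_perodd d hd j)); auto.
  destruct (Z_le_gt_dec t dz). apply U; lia.
  destruct (Z.eq_dec t (dz + 1)) as [->|]. rewrite (perodd_mid d hd _ (sref_perodd d hd j)); auto.
  replace t with (D - (D - t)) by lia.
  rewrite (perodd_mirror d hd _ _ (sref_perodd d hd j)), !beta_mirror, U; [rewrite beta_mirror; lia|unfold DD in *; lia].
Qed.

Lemma Wsub_to y : in_Wsub d nu y -> in_W d y /\ forall x, beta (y x) = beta x.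
Proof.
  intros [l [Hl Hw]]. split.
  - apply (in_W_ext d y (word d l)); [intros; symmetry; apply Hw|]. apply word_inW; auto. intros i Hi; apply (proj1 (Hl i Hi)).
  - intros x. rewrite <- Hw. clear Hw. induction l as [|j l IH]; simpl; auto.
    rewrite beta_sref; [apply IH|apply (Hl j); simpl; auto..]. intros i Hi; apply Hl; simpl; auto.
Qed.

Lemma Wsub_of y : in_W d y -> (forall x, beta (y x) = beta x) -> in_Wsub d nu y.
Proof.
  intros Hy Hb. remember (Z.to_nat (Ef d y)) as m eqn:Em. revert y Hy Hb Em.
  induction m as [m IH] using (well_founded_induction lt_wf). intros y Hy Hb Em.
  destruct (fin_dec (fun j => y (va j) < y (vb d j)) (fun j => Z_lt_dec _ _) d) as [[j [Hj Hdesc]]|Hasc].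
  - set (z := fun x => y (sref d j x)).
    assert (Hz : in_W d z) by (apply (inW_comp d y (sref d j) Hy (sref_inW d hd j Hj))).
    assert (Hne : ~ excluded nu j).
    { intros Hex. apply excl_beta in Hex; auto. apply Hex.
      pose proof (va_vb_range j Hj).
      assert (y (va j) <> y (vb d j)) by (intros E; apply (inW_inj d y) in E; auto; lia).
      pose proof (beta_mono (va j) (vb d j) ltac:(lia)).
      pose proof (beta_mono (y (vb d j)) (y (va j)) ltac:(lia)). rewrite !Hb in H2. lia. }
    pose proof (E_change d hd y j Hj Hy) as E. fold z in E.
    destruct (Z.ltb_spec (y (va j)) (y (vb d j))); [lia|].
    pose proof (Ef_nonneg d hd z).
    assert (Hbz : forall x, beta (z x) = beta x) by (intros x; unfold z; rewrite Hb; apply beta_sref; auto).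
    destruct (IH (Z.to_nat (Ef d z)) ltac:(lia) z Hz Hbz eq_refl) as [l [Hl Hw]].
    exists (l ++ [j]). split.
    + intros i Hi. apply in_app_iff in Hi. destruct Hi as [Hi|[<-|[]]]; auto.
    + intros x. rewrite word_snoc, Hw. unfold z. rewrite (sref_invol d hd); auto.
  - exists []. split; [intros i []|]. intros x; simpl; symmetry; apply (ascent_id d hd); auto.
Qed.

End Beta.


Section Adj.
Variable d : nat.
Hypothesis hd : (2 <= d)%nat.
Local Notation D := (DD d).
Local Notation dz := (Z.of_nat d).
Variables lam mu : list nat.
Hypothesis Hsl : lsum lam = d.
Hypothesis Hll : (2 <= length lam)%nat.
Hypothesis Hsm : lsum mu = d.
Hypothesis Hlm : (2 <= length mu)%nat.
Variable g : Z -> Z.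
Hypothesis Hg : in_W d g.
Hypothesis Hasc : forall j, (j <= d)%nat -> ~ excluded mu j -> g (va j) < g (vb d j).

Local Notation bl := (beta d lam).
Local Notation bm := (beta d mu).

Lemma gper : perodd d g.
Proof. apply inW_perodd; auto. Qed.

Lemma g_shift x q : g (x + q * D) = g x + q * D.
Proof. apply perodd_q; auto. apply gper. Qed.

Lemma g_odd x : g (- x) = - g x.
Proof. destruct gper as [_ H]; auto. Qed.

Lemma adj_base t : 0 <= t <= dz -> bm t = bm (t + 1) -> g t < g (t + 1).
Proof.
  intros Ht E. rewrite !(beta_base d hd mu Hsm Hlm) in E by lia.
  replace t with (Z.of_nat (Z.to_nat t)) in * by lia. set (j := Z.to_nat t) in *.
  assert (Hn : ~ excluded mu j) by (apply (bcount_step d hd mu Hsm Hlm); auto).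
  specialize (Hasc j ltac:(lia) Hn). unfold va, vb in Hasc.
  destruct (Nat.eqb_spec j 0) as [E0|E0]; [|destruct (Nat.eqb_spec j d) as [Ed|Ed]].
  - rewrite E0 in *. simpl. rewrite (perodd_0 d hd g gper). change (-1) with (- (1)) in Hasc.
    rewrite g_odd in Hasc. lia.
  - rewrite Ed in *. rewrite (perodd_mid d hd g gper).
    replace (dz + 2) with (D - dz) in Hasc by (unfold DD; lia).
    rewrite (perodd_mirror d hd g _ gper) in Hasc. unfold DD in Hasc. lia.
  - auto.
Qed.

Lemma adj_inc x : bm x = bm (x + 1) -> g x < g (x + 1).
Proof.
  intros E. destruct (decomp d hd x) as [q [t [Hx [Ht _]]]]. subst x.
  replace (q * D + t + 1) with ((t + 1) + q * D) in * by lia.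
  rewrite Z.add_comm in *. rewrite !(beta_shift d hd mu Hsm Hlm) in E. rewrite !g_shift.
  destruct (Z_le_gt_dec t dz).
  - assert (g t < g (t + 1)) by (apply adj_base; lia). lia.
  - set (u := D - 1 - t).
    assert (Hu : 0 <= u <= dz) by (unfold u, DD in *; lia).
    replace t with (D - (u + 1)) in * by (unfold u; lia).
    replace (D - (u + 1) + 1) with (D - u) in * by lia.
    rewrite !(beta_mirror d hd mu Hsm Hlm) in E. rewrite !(perodd_mirror d hd g _ gper).
    assert (g u < g (u + 1)) by (apply adj_base; lia). lia.
Qed.

Lemma blk_mono_nat (k : nat) x : bm x = bm (x + Z.of_nat k) -> g x <= g (x + Z.of_nat k).
Proof.
  induction k as [|k IH]; intros E.
  - rewrite Z.add_0_r. lia.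
  - replace (x + Z.of_nat (S k)) with ((x + Z.of_nat k) + 1) in * by lia.
    pose proof (beta_mono d hd mu Hsm Hlm x (x + Z.of_nat k) ltac:(lia)).
    pose proof (beta_mono d hd mu Hsm Hlm (x + Z.of_nat k) (x + Z.of_nat k + 1) ltac:(lia)).
    assert (E1 : bm x = bm (x + Z.of_nat k)) by lia.
    assert (E2 : bm (x + Z.of_nat k) = bm (x + Z.of_nat k + 1)) by lia.
    specialize (IH E1). pose proof (adj_inc _ E2). lia.
Qed.

Lemma blk_mono x x' : x <= x' -> bm x = bm x' -> g x <= g x'.
Proof.
  intros H E. replace x' with (x + Z.of_nat (Z.to_nat (x' - x))) in * by lia. apply blk_mono_nat; auto.
Qed.

Definition Rel (x x' : Z) : Prop := bm x = bm x' /\ bl (g x) = bl (g x').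

Lemma Rel_convex x x' z : x <= z -> z < x' -> Rel x x' -> Rel z (z + 1).
Proof.
  intros H1 H2 [E1 E2].
  pose proof (beta_mono d hd mu Hsm Hlm x z H1).
  pose proof (beta_mono d hd mu Hsm Hlm z (z + 1) ltac:(lia)).
  pose proof (beta_mono d hd mu Hsm Hlm (z + 1) x' ltac:(lia)).
  assert (bm x = bm z) by lia. assert (bm z = bm (z + 1)) by lia. assert (bm (z + 1) = bm x') by lia.
  split; auto.
  pose proof (blk_mono x z H1 ltac:(auto)) as G1.
  pose proof (blk_mono z (z + 1) ltac:(lia) ltac:(auto)) as G2.
  pose proof (blk_mono (z + 1) x' ltac:(lia) ltac:(auto)) as G3.
  pose proof (beta_mono d hd lam Hsl Hll _ _ G1).
  pose proof (beta_mono d hd lam Hsl Hll _ _ G2).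
  pose proof (beta_mono d hd lam Hsl Hll _ _ G3). lia.
Qed.

Variable bd : Z -> Z.
Variable c : Z.
Hypothesis bd_mono : forall x x', x <= x' -> bd x <= bd x'.
Hypothesis bd_shift : forall x q, bd (x + q * D) = bd x + q * c.
Hypothesis bd_odd : forall x, bd (- x) = - bd x.
Hypothesis bd_base : forall t, 0 <= t <= dz -> (bd t = bd (t + 1) <-> Rel t (t + 1)).

Lemma bd_adj x : bd x = bd (x + 1) <-> Rel x (x + 1).
Proof.
  destruct (decomp d hd x) as [q [t [Hx [Ht _]]]]. subst x.
  replace (q * D + t + 1) with ((t + 1) + q * D) by lia. rewrite (Z.add_comm (q * D) t).
  unfold Rel. rewrite !bd_shift, !(beta_shift d hd mu Hsm Hlm), !g_shift, !(beta_shift d hd lam Hsl Hll).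
  destruct (Z_le_gt_dec t dz).
  - specialize (bd_base t ltac:(lia)). unfold Rel in bd_base.
    split; intros H.
    + assert (B : bd t = bd (t + 1)) by lia. apply bd_base in B. destruct B; split; lia.
    + assert (bd t = bd (t + 1)) by (apply bd_base; destruct H; split; lia). lia.
  - set (u := D - 1 - t).
    assert (Hu : 0 <= u <= dz) by (unfold u, DD in *; lia).
    specialize (bd_base u Hu). unfold Rel in bd_base.
    replace t with (- (u + 1) + 1 * D) by (unfold u; lia).
    replace (- (u + 1) + 1 * D + 1) with (- u + 1 * D) by lia.
    rewrite !bd_shift, !(beta_shift d hd mu Hsm Hlm), !g_shift, !(beta_shift d hd lam Hsl Hll), !bd_odd,
      !(beta_odd d hd mu Hsm Hlm), !g_odd, !(beta_odd d hd lam Hsl Hll).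
    split; intros H.
    + assert (B : bd u = bd (u + 1)) by lia. apply bd_base in B. destruct B; split; lia.
    + assert (bd u = bd (u + 1)) by (apply bd_base; destruct H; split; lia). lia.
Qed.

Lemma bd_K_nat (k : nat) x : bd x = bd (x + Z.of_nat k) <-> Rel x (x + Z.of_nat k).
Proof.
  induction k as [|k IH].
  - rewrite Z.add_0_r. unfold Rel. tauto.
  - replace (x + Z.of_nat (S k)) with ((x + Z.of_nat k) + 1) by lia.
    pose proof (bd_adj (x + Z.of_nat k)) as A.
    split; intros H.
    + pose proof (bd_mono x (x + Z.of_nat k) ltac:(lia)).
      pose proof (bd_mono (x + Z.of_nat k) (x + Z.of_nat k + 1) ltac:(lia)).
      assert (R1 : Rel x (x + Z.of_nat k)) by (apply IH; lia).
      assert (R2 : Rel (x + Z.of_nat k) (x + Z.of_nat k + 1)) by (apply A; lia).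
      destruct R1, R2; split; congruence.
    + assert (R2 : Rel (x + Z.of_nat k) (x + Z.of_nat k + 1)) by (apply (Rel_convex x (x + Z.of_nat k + 1)); auto; lia).
      assert (R1 : Rel x (x + Z.of_nat k)) by (destruct H, R2; split; congruence).
      apply IH in R1. apply A in R2. lia.
Qed.

Lemma bd_K x x' : bd x = bd x' <-> Rel x x'.
Proof.
  destruct (Z_le_gt_dec x x').
  - replace x' with (x + Z.of_nat (Z.to_nat (x' - x))) by lia. apply bd_K_nat.
  - replace x with (x' + Z.of_nat (Z.to_nat (x - x'))) by lia.
    pose proof (bd_K_nat (Z.to_nat (x - x')) x'). unfold Rel in *. split; intros.
    + destruct H as [H _]. destruct H; [lia|split; congruence].
    + destruct H0. apply eq_sym, H. split; congruence.
Qed.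

End Adj.


Lemma perm_filter {A} (p : A -> bool) l l' : Permutation l l' -> Permutation (filter p l) (filter p l').
Proof.
  induction 1; simpl; auto.
  - destruct (p x); auto.
  - destruct (p x); destruct (p y); auto. apply perm_swap.
  - eapply perm_trans; eauto.
Qed.

Lemma count_same (p : Z -> bool) L1 L2 : NoDup L1 -> NoDup L2 -> (forall x, In x L1 <-> In x L2) ->
  length (filter p L1) = length (filter p L2).
Proof.
  intros H1 H2 H. apply Permutation_length. apply perm_filter. apply NoDup_Permutation; auto.
Qed.

Lemma filter_filter_len {A} (p q : A -> bool) L :
  length (filter p (filter q L)) = length (filter (fun x => andb (q x) (p x)) L).
Proof. induction L; simpl; auto. destruct (q a); simpl; auto. destruct (p a); simpl; auto. Qed.

Lemma zrange_length a b : length (zrange a b) = Z.to_nat (b - a + 1).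
Proof. unfold zrange. rewrite length_map, length_seq. reflexivity. Qed.

Lemma map_seq_shift (a : Z) (n m : nat) :
  map (fun t => a + Z.of_nat t) (seq n m) = map (fun t => (a + Z.of_nat n) + Z.of_nat t) (seq 0 m).
Proof.
  revert n; induction m as [|m IH]; intros n; simpl; auto. f_equal; [lia|].
  rewrite IH. rewrite <- seq_shift. rewrite map_map. apply map_ext. intros; lia.
Qed.

Lemma zrange_split a m b : a <= m <= b + 1 -> zrange a b = zrange a (m - 1) ++ zrange m b.
Proof.
  intros H. unfold zrange.
  replace (Z.to_nat (b - a + 1)) with (Z.to_nat (m - 1 - a + 1) + Z.to_nat (b - m + 1))%nat by lia.
  rewrite seq_app, map_app. f_equal. rewrite map_seq_shift. apply map_ext. intros; lia.
Qed.

Lemma firstn_seq n s m : firstn n (seq s m) = seq s (Nat.min n m).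
Proof.
  revert n s; induction m as [|m IH]; intros n s.
  - destruct n; reflexivity.
  - destruct n; simpl; [reflexivity|]. f_equal. apply IH.
Qed.

Lemma count_lt_seq (c : Z) (n : nat) : 0 <= c <= Z.of_nat n ->
  length (filter (fun i => Z.of_nat i <? c) (seq 0 n)) = Z.to_nat c.
Proof.
  intros H. replace n with (Z.to_nat c + (n - Z.to_nat c))%nat by lia.
  rewrite seq_app, filter_app, length_app.
  rewrite length_filter_all, length_filter_none, length_seq; [lia| |].
  - intros x Hx. apply in_seq in Hx. apply Z.ltb_ge. lia.
  - intros x Hx. apply in_seq in Hx. apply Z.ltb_lt. lia.
Qed.

Section GL.
Variable d : nat.
Local Notation dz := (Z.of_nat d).
Variable f : Z -> Z.
Variable L : nat.
Hypothesis fmono : forall t, 0 <= t <= dz -> f t <= f (t + 1).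
Hypothesis f0 : f 0 = 0.
Hypothesis fL : f (dz + 1) = Z.of_nat L - 1.
Hypothesis HL : (1 <= L)%nat.

Lemma fmono_nat (k : nat) x : 0 <= x -> x + Z.of_nat k <= dz + 1 -> f x <= f (x + Z.of_nat k).
Proof.
  induction k as [|k IH]; intros H1 H2.
  - rewrite Z.add_0_r; lia.
  - replace (x + Z.of_nat (S k)) with ((x + Z.of_nat k) + 1) by lia.
    specialize (IH H1 ltac:(lia)). specialize (fmono (x + Z.of_nat k) ltac:(lia)). lia.
Qed.

Lemma fmono' x x' : 0 <= x -> x <= x' -> x' <= dz + 1 -> f x <= f x'.
Proof.
  intros H1 H2 H3. replace x' with (x + Z.of_nat (Z.to_nat (x' - x))) by lia. apply fmono_nat; lia.
Qed.

Definition cntf (e : nat) : nat := length (filter (fun y => f y =? Z.of_nat e) (zrange 1 dz)).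
Definition cle (e : nat) : nat := length (filter (fun y => f y <=? Z.of_nat e) (zrange 1 dz)).
Definition nuf : list nat := map cntf (seq 0 L).

Lemma frange y : 1 <= y <= dz -> 0 <= f y <= Z.of_nat L - 1.
Proof.
  intros H. pose proof (fmono' 0 y ltac:(lia) ltac:(lia) ltac:(lia)).
  pose proof (fmono' y (dz + 1) ltac:(lia) ltac:(lia) ltac:(lia)). lia.
Qed.

Lemma sum_cntf e : fold_right Nat.add 0%nat (map cntf (seq 0 (S e))) = cle e.
Proof.
  induction e as [|e IH].
  - simpl. unfold cntf, cle. rewrite Nat.add_0_r. apply length_filter_ext.
    intros y Hy. apply In_zrange in Hy. pose proof (frange y Hy).
    destruct (Z.eqb_spec (f y) 0); destruct (Z.leb_spec (f y) 0); simpl in *; auto; lia.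
  - rewrite seq_S, map_app, fold_right_app. cbn [map fold_right].
    assert (E : forall a l, fold_right Nat.add (a + 0)%nat l = (fold_right Nat.add 0%nat l + a)%nat).
    { intros a l. induction l; simpl; lia. }
    rewrite E, IH. unfold cle, cntf.
    rewrite (length_filter_ext (fun y => f y <=? Z.of_nat (S e))
              (fun y => orb (f y <=? Z.of_nat e) (f y =? Z.of_nat (0 + S e)))).
    2:{ intros y _. destruct (Z.leb_spec (f y) (Z.of_nat (S e))); destruct (Z.leb_spec (f y) (Z.of_nat e));
        destruct (Z.eqb_spec (f y) (Z.of_nat (0 + S e))); simpl; auto; lia. }
    rewrite length_filter_or; [lia|]. intros y _ H. apply Z.leb_le in H. apply Z.eqb_neq. lia.
Qed.

Lemma length_nuf : length nuf = L.
Proof. unfold nuf. rewrite length_map, length_seq. reflexivity. Qed.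

Lemma psum_nuf e : (e < L)%nat -> psum nuf e = cle e.
Proof.
  intros H. unfold psum, nuf. rewrite firstn_map, firstn_seq. replace (Nat.min (S e) L) with (S e) by lia.
  apply sum_cntf.
Qed.

Lemma cle_all e : (L <= S e)%nat -> cle e = d.
Proof.
  intros H. unfold cle. rewrite length_filter_all. rewrite zrange_length. lia.
  intros y Hy. apply In_zrange in Hy. pose proof (frange y Hy). apply Z.leb_le. lia.
Qed.

Lemma lsum_nuf : lsum nuf = d.
Proof.
  rewrite <- (psum_last nuf (L - 1)) by (rewrite length_nuf; lia).
  rewrite psum_nuf by lia. apply cle_all. lia.
Qed.

Lemma cle_lt e t : (e < L - 1)%nat -> 0 <= t <= dz + 1 -> (Z.of_nat (cle e) < t <-> Z.of_nat e < f t).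
Proof.
  intros He Ht. unfold cle.
  pose proof (length_filter_le (fun y => f y <=? Z.of_nat e) (zrange 1 dz)) as Hle. rewrite zrange_length in Hle.
  destruct (Z.eq_dec t 0) as [->|H0]; [rewrite f0; lia|].
  destruct (Z.eq_dec t (dz + 1)) as [->|H1].
  { rewrite fL. split; intros; lia. }
  split; intros H.
  - destruct (Z_lt_le_dec (Z.of_nat e) (f t)); auto. exfalso.
    rewrite (zrange_split 1 (t + 1) dz) in H by lia. rewrite filter_app, length_app in H.
    rewrite (length_filter_all _ (zrange 1 (t + 1 - 1))) in H.
    + rewrite zrange_length in H. lia.
    + intros y Hy. apply In_zrange in Hy. apply Z.leb_le. pose proof (fmono' y t ltac:(lia) ltac:(lia) ltac:(lia)). lia.
  - rewrite (zrange_split 1 t dz) by lia. rewrite filter_app, length_app.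
    rewrite (length_filter_none _ (zrange t dz)).
    + pose proof (length_filter_le (fun y => f y <=? Z.of_nat e) (zrange 1 (t - 1))). rewrite zrange_length in H2. lia.
    + intros y Hy. apply In_zrange in Hy. apply Z.leb_gt. pose proof (fmono' t y ltac:(lia) ltac:(lia) ltac:(lia)). lia.
Qed.

Lemma bcount_nuf t : 0 <= t <= dz + 1 -> bcount nuf t = f t.
Proof.
  intros Ht. unfold bcount. rewrite length_nuf.
  rewrite (length_filter_ext _ (fun i => Z.of_nat i <? f t)).
  - pose proof (fmono' 0 t ltac:(lia) ltac:(lia) ltac:(lia)).
    pose proof (fmono' t (dz + 1) ltac:(lia) ltac:(lia) ltac:(lia)).
    rewrite count_lt_seq; lia.
  - intros i Hi. apply in_seq in Hi. rewrite psum_nuf by lia.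
    destruct (Z.ltb_spec (Z.of_nat (cle i)) t); destruct (Z.ltb_spec (Z.of_nat i) (f t)); auto;
    pose proof (cle_lt i t ltac:(lia) Ht); lia.
Qed.

End GL.


Lemma psum_S_nth l i : psum l (S i) = (psum l i + nth (S i) l 0)%nat.
Proof.
  revert i; induction l as [|a l IH]; intros i; [rewrite !psum_nil; destruct i; simpl; lia|].
  destruct i; [rewrite psum_consS, psum_cons0; unfold psum; simpl; destruct l; simpl; lia|].
  rewrite !psum_consS, IH. simpl. lia.
Qed.

Lemma len_same (L1 L2 : list Z) : NoDup L1 -> NoDup L2 -> (forall x, In x L1 <-> In x L2) -> length L1 = length L2.
Proof. intros. apply Permutation_length, NoDup_Permutation; auto. Qed.

Section Rint.
Variable d r : nat.
Hypothesis hd : (2 <= d)%nat.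
Local Notation D := (DD d).
Local Notation dz := (Z.of_nat d).
Variable nu : list nat.
Hypothesis Hnu : in_Lambda r d nu.

Lemma Hsum' : lsum nu = d.
Proof. destruct Hnu; auto. Qed.
Lemma Hlen' : (2 <= length nu)%nat.
Proof. destruct Hnu; lia. Qed.
Lemma Hlen_eq : length nu = (r + 2)%nat.
Proof. destruct Hnu; auto. Qed.

Local Notation bt := (beta d nu).

Lemma npz_eq : npz nu = 2 * Z.of_nat r + 2.
Proof. unfold npz. rewrite Hlen_eq. lia. Qed.

Lemma bt_0 : bt 0 = 0.
Proof. rewrite (beta_base d hd nu Hsum' Hlen') by lia. apply (bcount_low d hd nu Hsum' Hlen'); lia. Qed.

Lemma bt_mid : bt (dz + 1) = Z.of_nat r + 1.
Proof.
  rewrite (beta_base d hd nu Hsum' Hlen') by lia. rewrite (bcount_high d hd nu Hsum' Hlen') by lia. rewrite Hlen_eq. lia.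
Qed.

Lemma bt_le t m : (m <= r)%nat -> (bt t <= Z.of_nat m <-> t <= Z.of_nat (psum nu m)).
Proof.
  intros Hm. pose proof (psum_le_sum nu m) as Hp. rewrite Hsum' in Hp.
  destruct (Z_lt_le_dec t 0).
  - pose proof (beta_mono d hd nu Hsum' Hlen' t 0 ltac:(lia)). rewrite bt_0 in H. lia.
  - destruct (Z_le_gt_dec t (dz + 1)).
    + rewrite (beta_base d hd nu Hsum' Hlen') by lia. apply (bcount_le d hd nu Hsum' Hlen'). rewrite Hlen_eq; lia.
    + pose proof (beta_mono d hd nu Hsum' Hlen' (dz + 1) t ltac:(lia)). rewrite bt_mid in H. lia.
Qed.

Lemma psum_0 : psum nu 0 = nth 0 nu 0%nat.
Proof. destruct nu; [reflexivity|]. rewrite psum_cons0. reflexivity. Qed.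

Lemma psum_r : (psum nu r + nth (r + 1) nu 0 = d)%nat.
Proof.
  replace (r + 1)%nat with (S r) by lia. rewrite <- psum_S_nth. rewrite psum_last. apply Hsum'. rewrite Hlen_eq; lia.
Qed.

Lemma mem_Rbase t (m : nat) : (m <= r + 1)%nat -> (In t (Rbase d r nu m) <-> bt t = Z.of_nat m).
Proof.
  intros Hm. unfold Rbase.
  destruct (Nat.eqb_spec m 0) as [->|H0]; [|destruct (Nat.leb_spec m r)]; rewrite In_zrange.
  - pose proof (bt_le t 0 ltac:(lia)). pose proof (bt_le (- t) 0 ltac:(lia)).
    rewrite (beta_odd d hd nu Hsum' Hlen') in H0. rewrite psum_0 in *. lia.
  - pose proof (bt_le t m ltac:(lia)). pose proof (bt_le t (m - 1) ltac:(lia)).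
    replace (Z.of_nat (m - 1)) with (Z.of_nat m - 1) in H2 by lia. lia.
  - assert (m = r + 1)%nat by lia. subst m.
    pose proof (bt_le t r ltac:(lia)). pose proof (bt_le (D - t) r ltac:(lia)).
    rewrite (beta_mirror d hd nu Hsum' Hlen'), npz_eq in H2. pose proof psum_r. unfold DD in *. lia.
Qed.

Lemma mem_Rint x i : In x (Rint d r nu i) <-> bt x = i.
Proof.
  unfold Rint. cbv zeta. set (np := 2 * Z.of_nat r + 2).
  assert (Hnp : 0 < np) by (unfold np; lia).
  pose proof (Z.div_mod i np ltac:(lia)) as Hi. pose proof (Z.mod_pos_bound i np Hnp) as Hr.
  set (q := i / np) in *. set (rr := i mod np) in *.
  destruct (Z.leb_spec rr (Z.of_nat r + 1)).
  - rewrite in_map_iff. split.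
    + intros [y [<- Hy]]. apply mem_Rbase in Hy; [|lia]. rewrite (beta_shift d hd nu Hsum' Hlen'), npz_eq. unfold np in *. lia.
    + intros E. exists (x - q * D). split; [lia|]. apply mem_Rbase; [lia|].
      replace x with (x - q * D + q * D) in E by lia. rewrite (beta_shift d hd nu Hsum' Hlen'), npz_eq in E.
      unfold np in *. lia.
  - rewrite in_map_iff. split.
    + intros [y [<- Hy]]. apply mem_Rbase in Hy; [|lia].
      rewrite (beta_shift d hd nu Hsum' Hlen'), (beta_odd d hd nu Hsum' Hlen'), npz_eq. unfold np in *. lia.
    + intros E. exists ((q + 1) * D - x). split; [lia|]. apply mem_Rbase; [lia|].
      replace ((q + 1) * D - x) with (- x + (q + 1) * D) by lia.
      rewrite (beta_shift d hd nu Hsum' Hlen'), (beta_odd d hd nu Hsum' Hlen'), npz_eq. unfold np in *. lia.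
Qed.

Lemma NoDup_Rbase m : NoDup (Rbase d r nu m).
Proof. unfold Rbase. destruct (Nat.eqb m 0); [|destruct (Nat.leb m r)]; apply NoDup_zrange. Qed.

Lemma NoDup_Rint i : NoDup (Rint d r nu i).
Proof.
  unfold Rint. cbv zeta. destruct (_ <=? _).
  - apply FinFun.Injective_map_NoDup; [intros a b E; lia|apply NoDup_Rbase].
  - apply FinFun.Injective_map_NoDup; [intros a b E; lia|apply NoDup_Rbase].
Qed.

End Rint.

Lemma kappa_count d r lam mu g (hd : (2 <= d)%nat) : in_Lambda r d lam -> in_W d g -> forall i j,
  kappa d r lam g mu i j = length (filter (fun y => beta d lam (g y) =? i) (Rint d r mu j)).
Proof.
  intros Hl Hg i j.
  unfold kappa. rewrite <- (length_map g (filter (fun y => beta d lam (g y) =? i) (Rint d r mu j))).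
  apply len_same.
  - apply NoDup_filter; apply NoDup_Rint; auto.
  - apply FinFun.Injective_map_NoDup; [intros a b E; exact (inW_inj d g a b Hg E)|].
    apply NoDup_filter; apply NoDup_Rint; auto.
  - intros x. rewrite filter_In, in_map_iff, existsb_exists. split.
    + intros [Hx [y [Hy E]]]. apply Z.eqb_eq in E. exists y. split; auto. apply filter_In. split; auto.
      apply Z.eqb_eq. rewrite E. apply (mem_Rint d r hd lam Hl) in Hx. auto.
    + intros [y [<- Hy]]. apply filter_In in Hy. destruct Hy as [Hy E]. apply Z.eqb_eq in E.
      split; [apply (mem_Rint d r hd lam Hl); auto|]. exists y. split; auto. apply Z.eqb_refl.
Qed.


Section Delta.
Variables d r : nat.
Hypothesis hd : (2 <= d)%nat.
Local Notation D := (DD d).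
Local Notation dz := (Z.of_nat d).
Local Notation rz := (Z.of_nat r).
Variables lam mu : list nat.
Hypothesis Hlam : in_Lambda r d lam.
Hypothesis Hmu : in_Lambda r d mu.
Variable g : Z -> Z.
Hypothesis Hg : in_W d g.
Hypothesis Hasc : forall j, (j <= d)%nat -> ~ excluded mu j -> g (va j) < g (vb d j).
Variable k : nat -> nat.
Hypothesis hk : valid_k r (kappa d r lam g mu) k.

Local Notation bl := (beta d lam).
Local Notation bm := (beta d mu).
Local Notation A := (kappa d r lam g mu).

Let Hsl := Hsum' d r lam Hlam.
Let Hll := Hlen' d r hd lam Hlam.
Let Hsm := Hsum' d r mu Hmu.
Let Hlm := Hlen' d r hd mu Hmu.

Lemma bmono x x' : x <= x' -> bm x = bm x' -> g x <= g x'.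
Proof. apply (blk_mono d hd lam mu Hsl Hll Hsm Hlm g Hg Hasc). Qed.
Lemma bm_mono x x' : x <= x' -> bm x <= bm x'.
Proof. apply (beta_mono d hd mu Hsm Hlm). Qed.
Lemma bl_mono x x' : x <= x' -> bl x <= bl x'.
Proof. apply (beta_mono d hd lam Hsl Hll). Qed.
Lemma bm_0 : bm 0 = 0. Proof. apply (bt_0 d r hd mu Hmu). Qed.
Lemma bl_0 : bl 0 = 0. Proof. apply (bt_0 d r hd lam Hlam). Qed.
Lemma bm_mid : bm (dz + 1) = rz + 1. Proof. apply (bt_mid d r hd mu Hmu). Qed.
Lemma bl_mid : bl (dz + 1) = rz + 1. Proof. apply (bt_mid d r hd lam Hlam). Qed.
Lemma bm_odd x : bm (- x) = - bm x. Proof. apply (beta_odd d hd mu Hsm Hlm). Qed.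
Lemma bl_odd x : bl (- x) = - bl x. Proof. apply (beta_odd d hd lam Hsl Hll). Qed.
Lemma bm_mirror x : bm (D - x) = 2 * rz + 2 - bm x.
Proof. rewrite (beta_mirror d hd mu Hsm Hlm), (npz_eq d r hd mu Hmu). reflexivity. Qed.
Lemma bl_mirror x : bl (D - x) = 2 * rz + 2 - bl x.
Proof. rewrite (beta_mirror d hd lam Hsl Hll), (npz_eq d r hd lam Hlam). reflexivity. Qed.
Lemma gp : perodd d g. Proof. apply inW_perodd; auto. Qed.
Lemma g0 : g 0 = 0. Proof. apply (perodd_0 d hd g gp). Qed.
Lemma gmid : g (dz + 1) = dz + 1. Proof. apply (perodd_mid d hd g gp). Qed.
Lemma godd x : g (- x) = - g x. Proof. destruct gp as [_ H]; auto. Qed.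
Lemma gmirror x : g (D - x) = D - g x. Proof. apply (perodd_mirror d hd g x gp). Qed.
Lemma memRm x i : In x (Rint d r mu i) <-> bm x = i. Proof. apply (mem_Rint d r hd mu Hmu). Qed.
Lemma A_eq i j : A i j = length (filter (fun y => bl (g y) =? i) (Rint d r mu j)).
Proof. apply (kappa_count d r lam mu g hd Hlam Hg). Qed.

Lemma bm_pos y : 1 <= bm y -> 1 <= y.
Proof. intros H. destruct (Z_le_gt_dec y 0); [|lia]. pose proof (bm_mono y 0 l). rewrite bm_0 in H0. lia. Qed.
Lemma bm_le_r y : bm y <= rz -> y <= dz.
Proof. intros H. destruct (Z_le_gt_dec y dz); [lia|]. pose proof (bm_mono (dz + 1) y ltac:(lia)). rewrite bm_mid in H0. lia. Qed.

Definition Cnt (j i : Z) : nat := length (filter (fun y => andb (bm y =? j) (bl (g y) =? i)) (zrange 1 dz)).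

Lemma NoDup_Cnt j i : NoDup (filter (fun y => andb (bm y =? j) (bl (g y) =? i)) (zrange 1 dz)).
Proof. apply NoDup_filter, NoDup_zrange. Qed.
Lemma NoDup_Af i j : NoDup (filter (fun y => bl (g y) =? i) (Rint d r mu j)).
Proof. apply NoDup_filter. apply NoDup_Rint; auto. Qed.

Lemma In_Cnt y j i : In y (filter (fun y => andb (bm y =? j) (bl (g y) =? i)) (zrange 1 dz)) <->
  1 <= y <= dz /\ bm y = j /\ bl (g y) = i.
Proof.
  rewrite filter_In, In_zrange, Bool.andb_true_iff, !Z.eqb_eq. tauto.
Qed.
Lemma In_Af y i j : In y (filter (fun y => bl (g y) =? i) (Rint d r mu j)) <-> bm y = j /\ bl (g y) = i.
Proof. rewrite filter_In, memRm, Z.eqb_eq. tauto. Qed.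

Lemma A_mid i j : 1 <= j <= rz -> A i j = Cnt j i.
Proof.
  intros Hj. rewrite A_eq. unfold Cnt. apply len_same; [apply NoDup_Af|apply NoDup_Cnt|].
  intros y. rewrite In_Af, In_Cnt. split; [|tauto].
  intros [H1 H2]. pose proof (bm_pos y ltac:(lia)). pose proof (bm_le_r y ltac:(lia)). lia.
Qed.

Lemma A_col0 i : 1 <= i -> A i 0 = Cnt 0 i.
Proof.
  intros Hi. rewrite A_eq. unfold Cnt. apply len_same; [apply NoDup_Af|apply NoDup_Cnt|].
  intros y. rewrite In_Af, In_Cnt. split; [|tauto].
  intros [H1 H2]. pose proof (bm_le_r y ltac:(lia)).
  destruct (Z_le_gt_dec y 0).
  - pose proof (bmono y 0 l ltac:(rewrite bm_0; auto)). rewrite g0 in H0.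
    pose proof (bl_mono _ _ H0). rewrite bl_0 in H3. lia.
  - lia.
Qed.

Lemma A_collast i : i <= rz -> A i (rz + 1) = Cnt (rz + 1) i.
Proof.
  intros Hi. rewrite A_eq. unfold Cnt. apply len_same; [apply NoDup_Af|apply NoDup_Cnt|].
  intros y. rewrite In_Af, In_Cnt. split; [|tauto].
  intros [H1 H2]. pose proof (bm_pos y ltac:(lia)).
  destruct (Z_le_gt_dec y dz); [lia|].
  pose proof (bmono (dz + 1) y ltac:(lia) ltac:(rewrite bm_mid; auto)). rewrite gmid in H0.
  pose proof (bl_mono _ _ H0). rewrite bl_mid in H3. lia.
Qed.


Lemma aprime_val (c : nat) (i : Z) : A i i = (2 * c + 1)%nat -> aprime A i = c.
Proof.
  intros E. unfold aprime. rewrite E. replace (2 * c + 1 - 1)%nat with (c * 2)%nat by lia.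
  apply Nat.div_mul. lia.
Qed.

Lemma A00 : A 0 0 = (2 * Cnt 0 0 + 1)%nat.
Proof.
  set (P := filter (fun y => andb (bm y =? 0) (bl (g y) =? 0)) (zrange 1 dz)).
  assert (HP : forall y, In y P <-> 1 <= y <= dz /\ bm y = 0 /\ bl (g y) = 0) by (intros; apply In_Cnt).
  transitivity (length (map Z.opp P ++ 0 :: P)).
  2:{ rewrite length_app, length_map. simpl. unfold Cnt. fold P. lia. }
  rewrite A_eq. apply len_same; [apply NoDup_Af| |].
  - apply NoDup_app_dis.
    + apply FinFun.Injective_map_NoDup; [intros a b E; lia|apply NoDup_Cnt].
    + constructor; [rewrite HP; lia|apply NoDup_Cnt].
    + intros x Hx. apply in_map_iff in Hx. destruct Hx as [z [<- Hz]]. apply HP in Hz.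
      simpl. rewrite HP. lia.
  - intros y. rewrite In_Af, in_app_iff, in_map_iff. simpl. rewrite HP. split.
    + intros [H1 H2]. pose proof (bm_le_r y ltac:(lia)). pose proof (bm_le_r (- y) ltac:(rewrite bm_odd; lia)).
      destruct (Z_lt_le_dec y 0).
      * left. exists (- y). split; [lia|]. apply HP. rewrite bm_odd, godd, bl_odd. lia.
      * right. destruct (Z.eq_dec y 0); [left; lia|right; lia].
    + intros [[z [<- Hz]]|[<-|Hy]].
      * apply HP in Hz. rewrite bm_odd, godd, bl_odd. lia.
      * rewrite bm_0, g0, bl_0. auto.
      * lia.
Qed.

Lemma Alast : A (rz + 1) (rz + 1) = (2 * Cnt (rz + 1) (rz + 1) + 1)%nat.
Proof.
  set (P := filter (fun y => andb (bm y =? rz + 1) (bl (g y) =? rz + 1)) (zrange 1 dz)).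
  assert (HP : forall y, In y P <-> 1 <= y <= dz /\ bm y = rz + 1 /\ bl (g y) = rz + 1) by (intros; apply In_Cnt).
  transitivity (length (map (fun z => D - z) P ++ (dz + 1) :: P)).
  2:{ rewrite length_app, length_map. simpl. unfold Cnt. fold P. lia. }
  rewrite A_eq. apply len_same; [apply NoDup_Af| |].
  - apply NoDup_app_dis.
    + apply FinFun.Injective_map_NoDup; [intros a b E; lia|apply NoDup_Cnt].
    + constructor; [rewrite HP; lia|apply NoDup_Cnt].
    + intros x Hx. apply in_map_iff in Hx. destruct Hx as [z [<- Hz]]. apply HP in Hz.
      simpl. rewrite HP. unfold DD. lia.
  - intros y. rewrite In_Af, in_app_iff, in_map_iff. simpl. rewrite HP. split.
    + intros [H1 H2]. pose proof (bm_pos y ltac:(lia)). pose proof (bm_pos (D - y) ltac:(rewrite bm_mirror; lia)).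
      destruct (Z_le_gt_dec y dz); [right; right; lia|].
      destruct (Z.eq_dec y (dz + 1)); [right; left; lia|].
      left. exists (D - y). split; [lia|]. apply HP. rewrite bm_mirror, gmirror, bl_mirror. unfold DD in *. lia.
    + intros [[z [<- Hz]]|[<-|Hy]].
      * apply HP in Hz. rewrite bm_mirror, gmirror, bl_mirror. lia.
      * rewrite bm_mid, gmid, bl_mid. auto.
      * lia.
Qed.


Definition Wn (j : nat) : nat :=
  if Nat.eqb j 0 then (k 0 + 1)%nat else if Nat.eqb j (r + 1) then (k (r + 1) + 1)%nat else (2 * k j + 1)%nat.
Fixpoint offN (j : nat) : nat := match j with O => O | S j' => (offN j' + Wn j')%nat end.
Definition loN (j : nat) : Z := if Nat.eqb j 0 then 0 else Z.of_nat j - Z.of_nat (k j).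
Definition idx (y : Z) : Z := Z.of_nat (offN (Z.to_nat (bm y))) + bl (g y) - loN (Z.to_nat (bm y)).
Definition LL : nat := offN (r + 2).

Lemma Wn_pos j : (1 <= Wn j)%nat.
Proof. unfold Wn. destruct (Nat.eqb j 0); [lia|]. destruct (Nat.eqb j (r + 1)); lia. Qed.

Lemma offN_mono j j' : (j < j')%nat -> (offN (S j) <= offN j')%nat.
Proof.
  induction 1; [lia|]. simpl. pose proof (Wn_pos m). simpl in IHle. lia.
Qed.

Lemma bm_range y : 0 <= y <= dz + 1 -> 0 <= bm y <= rz + 1.
Proof.
  intros H. pose proof (bm_mono 0 y ltac:(lia)). pose proof (bm_mono y (dz + 1) ltac:(lia)).
  rewrite bm_0 in *. rewrite bm_mid in *. lia.
Qed.

Lemma A_nz y : bl (g y) <> bl (g y) + 1 -> A (bl (g y)) (bm y) <> 0%nat.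
Proof.
  intros _. rewrite A_eq. intros E. apply length_zero_iff_nil in E.
  assert (In y (filter (fun y0 => bl (g y0) =? bl (g y)) (Rint d r mu (bm y)))) by (apply In_Af; auto).
  rewrite E in H. contradiction.
Qed.

Lemma bnd y : 0 <= y <= dz + 1 ->
  loN (Z.to_nat (bm y)) <= bl (g y) <= loN (Z.to_nat (bm y)) + Z.of_nat (Wn (Z.to_nat (bm y))) - 1.
Proof.
  intros Hy. pose proof (bm_range y Hy) as Hr. unfold loN, Wn.
  destruct (Z.eq_dec y 0) as [->|Hy0].
  { rewrite bm_0, g0, bl_0. simpl. lia. }
  destruct (Z.eq_dec y (dz + 1)) as [->|Hy1].
  { rewrite bm_mid, gmid, bl_mid. replace (Z.to_nat (rz + 1)) with (r + 1)%nat by lia.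
    destruct (Nat.eqb_spec (r + 1) 0); [lia|]. rewrite Nat.eqb_refl. lia. }
  pose proof (hk (bl (g y)) (Z.to_nat (bm y)) ltac:(lia)) as Hk.
  replace (Z.of_nat (Z.to_nat (bm y))) with (bm y) in Hk by lia.
  specialize (Hk (A_nz y ltac:(lia))).
  destruct (Nat.eqb_spec (Z.to_nat (bm y)) 0) as [E0|E0].
  - assert (bm y = 0) by lia.
    pose proof (bmono 0 y ltac:(lia) ltac:(rewrite bm_0; auto)). rewrite g0 in H0.
    pose proof (bl_mono _ _ H0). rewrite bl_0 in H1. rewrite E0 in Hk. lia.
  - destruct (Nat.eqb_spec (Z.to_nat (bm y)) (r + 1)) as [E1|E1].
    + assert (bm y = rz + 1) by lia.
      pose proof (bmono y (dz + 1) ltac:(lia) ltac:(rewrite bm_mid; auto)). rewrite gmid in H0.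
      pose proof (bl_mono _ _ H0). rewrite bl_mid in H1. rewrite E1 in *. lia.
    + lia.
Qed.

Lemma idx_range y : 0 <= y <= dz + 1 ->
  Z.of_nat (offN (Z.to_nat (bm y))) <= idx y <= Z.of_nat (offN (S (Z.to_nat (bm y)))) - 1.
Proof. intros Hy. pose proof (bnd y Hy). unfold idx. simpl. lia. Qed.

Lemma idx_0 : idx 0 = 0.
Proof. unfold idx. rewrite bm_0, g0, bl_0. reflexivity. Qed.

Lemma idx_last : idx (dz + 1) = Z.of_nat LL - 1.
Proof.
  unfold idx, LL. rewrite bm_mid, gmid, bl_mid. replace (Z.to_nat (rz + 1)) with (r + 1)%nat by lia.
  replace (r + 2)%nat with (S (r + 1)) by lia. simpl. unfold loN, Wn.
  destruct (Nat.eqb_spec (r + 1) 0); [lia|]. rewrite Nat.eqb_refl. lia.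
Qed.

Lemma idx_adj t : 0 <= t <= dz -> idx t <= idx (t + 1) /\ (idx t = idx (t + 1) <-> Rel d lam mu g t (t + 1)).
Proof.
  intros Ht. pose proof (idx_range t ltac:(lia)). pose proof (idx_range (t + 1) ltac:(lia)).
  pose proof (bm_mono t (t + 1) ltac:(lia)). pose proof (bm_range t ltac:(lia)). pose proof (bm_range (t + 1) ltac:(lia)).
  unfold Rel.
  destruct (Z.eq_dec (bm t) (bm (t + 1))) as [E|E].
  - pose proof (bmono t (t + 1) ltac:(lia) E). pose proof (bl_mono _ _ H4).
    unfold idx. rewrite E. split; [lia|]. split; [intros; split; auto; lia|intros [_ ?]; lia].
  - pose proof (offN_mono (Z.to_nat (bm t)) (Z.to_nat (bm (t + 1))) ltac:(lia)). split; [lia|].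
    split; [lia|intros [? _]; contradiction].
Qed.


Lemma offN_le j j' : (j <= j')%nat -> (offN j <= offN j')%nat.
Proof. induction 1; [lia|]. simpl. lia. Qed.

Lemma cntf_seg j t : (j <= r + 1)%nat -> (t < Wn j)%nat ->
  cntf d idx (offN j + t) = Cnt (Z.of_nat j) (loN j + Z.of_nat t).
Proof.
  intros Hj Ht. unfold cntf, Cnt. apply length_filter_ext. intros y Hy. apply In_zrange in Hy.
  pose proof (idx_range y ltac:(lia)) as IR. pose proof (bm_range y ltac:(lia)) as BR.
  set (j' := Z.to_nat (bm y)) in *.
  assert (Ej : bm y = Z.of_nat j') by (unfold j'; lia).
  destruct (lt_eq_lt_dec j' j) as [[Hlt|Heq]|Hgt].
  - pose proof (offN_mono j' j Hlt).
    destruct (Z.eqb_spec (idx y) (Z.of_nat (offN j + t))); [lia|].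
    destruct (Z.eqb_spec (bm y) (Z.of_nat j)); [lia|]. reflexivity.
  - subst j. unfold idx. fold j'.
    destruct (Z.eqb_spec (Z.of_nat (offN j') + bl (g y) - loN j') (Z.of_nat (offN j' + t)));
    destruct (Z.eqb_spec (bm y) (Z.of_nat j')); destruct (Z.eqb_spec (bl (g y)) (loN j' + Z.of_nat t)); simpl; lia.
  - pose proof (offN_mono j j' Hgt). simpl in H.
    destruct (Z.eqb_spec (idx y) (Z.of_nat (offN j + t))); [lia|].
    destruct (Z.eqb_spec (bm y) (Z.of_nat j)); [lia|]. reflexivity.
Qed.

Lemma map_seq_eq {B} (F G : nat -> B) a b n :
  (forall t, (t < n)%nat -> F (a + t)%nat = G (b + t)%nat) -> map F (seq a n) = map G (seq b n).
Proof.
  revert a b; induction n as [|n IH]; intros a b H; simpl; auto.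
  f_equal. specialize (H 0%nat ltac:(lia)). rewrite !Nat.add_0_r in H. auto.
  apply IH. intros t Ht. specialize (H (S t) ltac:(lia)). replace (S a + t)%nat with (a + S t)%nat by lia. replace (S b + t)%nat with (b + S t)%nat by lia. auto.
Qed.

Lemma seg0_eq : aprime A 0 :: map (fun t => A (Z.of_nat t) 0) (seq 1 (k 0%nat)) = map (cntf d idx) (seq 0 (Wn 0)).
Proof.
  unfold Wn. simpl Nat.eqb. cbv iota. rewrite Nat.add_1_r. simpl seq. simpl map. f_equal.
  - pose proof (cntf_seg 0 0 ltac:(lia) ltac:(unfold Wn; simpl; lia)). simpl in H. rewrite H.
    unfold loN. simpl. apply aprime_val. apply A00.
  - apply map_seq_eq. intros t Ht.
    change (cntf d idx (1 + t)) with (cntf d idx (offN 0 + (1 + t))).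
    rewrite cntf_seg by (unfold Wn; simpl; lia).
    unfold loN. simpl Nat.eqb. cbv iota. rewrite A_col0 by lia. f_equal.
Qed.

Lemma col_eq j : (1 <= j <= r)%nat ->
  map (fun t => A (Z.of_nat j - Z.of_nat (k j) + Z.of_nat t) (Z.of_nat j)) (seq 0 (2 * k j + 1)) =
  map (cntf d idx) (seq (offN j) (Wn j)).
Proof.
  intros Hj. assert (EW : Wn j = (2 * k j + 1)%nat).
  { unfold Wn. destruct (Nat.eqb_spec j 0); [lia|]. destruct (Nat.eqb_spec j (r + 1)); [lia|]. auto. }
  rewrite EW. apply map_seq_eq. intros t Ht.
  rewrite cntf_seg by lia. unfold loN. destruct (Nat.eqb_spec j 0); [lia|].
  rewrite A_mid by lia. f_equal; lia.
Qed.

Lemma concat_eq m : (m <= r)%nat ->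
  concat (map (fun j => map (fun t => A (Z.of_nat j - Z.of_nat (k j) + Z.of_nat t) (Z.of_nat j)) (seq 0 (2 * k j + 1))) (seq 1 m))
  = map (cntf d idx) (seq (offN 1) (offN (S m) - offN 1)).
Proof.
  induction m as [|m IH]; intros Hm.
  - replace (offN 1 - offN 1)%nat with 0%nat by lia. reflexivity.
  - rewrite seq_S, map_app, concat_app, IH by lia. cbn [map concat]. rewrite app_nil_r.
    rewrite (col_eq (1 + m)) by lia.
    pose proof (offN_le 1 (S m) ltac:(lia)).
    assert (E : offN (S (S m)) = (offN (S m) + Wn (S m))%nat) by reflexivity.
    rewrite E. replace (offN (S m) + Wn (S m) - offN 1)%nat with ((offN (S m) - offN 1) + Wn (S m))%nat by lia.
    rewrite seq_app, map_app. f_equal.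
    replace (offN 1 + (offN (S m) - offN 1))%nat with (offN (S m)) by lia. replace (1 + m)%nat with (S m) by lia.
    reflexivity.
Qed.

Lemma last_eq :
  map (fun t => A (rz + 1 - Z.of_nat (k (r + 1)%nat) + Z.of_nat t) (rz + 1)) (seq 0 (k (r + 1)%nat)) ++ [aprime A (rz + 1)]
  = map (cntf d idx) (seq (offN (r + 1)) (Wn (r + 1))).
Proof.
  assert (EW : Wn (r + 1) = (k (r + 1) + 1)%nat).
  { unfold Wn. destruct (Nat.eqb_spec (r + 1) 0); [lia|]. rewrite Nat.eqb_refl. auto. }
  assert (EL : loN (r + 1) = rz + 1 - Z.of_nat (k (r + 1)%nat)).
  { unfold loN. destruct (Nat.eqb_spec (r + 1) 0); [lia|]. lia. }
  rewrite EW, (Nat.add_1_r (k (r + 1)%nat)), seq_S, map_app. f_equal.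
  - apply map_seq_eq. intros t Ht. rewrite cntf_seg by lia. rewrite EL.
    rewrite A_collast by lia. f_equal; lia.
  - simpl. f_equal. rewrite cntf_seg by lia. rewrite EL. apply aprime_val.
    replace (Z.of_nat (r + 1)) with (rz + 1) by lia.
    replace (rz + 1 - Z.of_nat (k (r + 1)%nat) + Z.of_nat (k (r + 1)%nat)) with (rz + 1) by lia. apply Alast.
Qed.

Lemma delta_eq : delta r A k = nuf d idx LL.
Proof.
  unfold delta, nuf, LL.
  fold rz. rewrite seg0_eq, concat_eq, last_eq by lia.
  pose proof (offN_le 1 (S r) ltac:(lia)).
  assert (E : offN (r + 2) = (Wn 0 + (offN (S r) - offN 1) + Wn (r + 1))%nat).
  { replace (r + 2)%nat with (S (r + 1)) by lia. simpl offN at 1. replace (r + 1)%nat with (S r) by lia.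
    simpl in H |- *. lia. }
  rewrite E, !seq_app, !map_app. rewrite <- app_assoc.
  assert (E1 : offN 1 = Wn 0) by reflexivity.
  assert (E2 : offN (r + 1) = (0 + (Wn 0 + (offN (S r) - offN 1)))%nat).
  { replace (r + 1)%nat with (S r) by lia. lia. }
  rewrite E2, E1. reflexivity.
Qed.

End Delta.


Theorem proposition2p5p3 (r d : nat) (hd : (2 <= d)%nat)
  (lam mu : list nat) (hlam : in_Lambda r d lam) (hmu : in_Lambda r d mu)
  (g : Z -> Z) (hg : in_W d g) (hD : in_Dlm d lam mu g)
  (k : nat -> nat) (hk : valid_k r (kappa d r lam g mu) k) :
  forall h : Z -> Z,
    in_Wsub d (delta r (kappa d r lam g mu) k) h <->
    ((exists w, in_Wsub d lam w /\ forall x, g (h x) = w (g x)) /\ in_Wsub d mu h).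
Proof.
  destruct hD as [_ [ginv [G1 [G2 HDmu]]]].
  pose proof (Dl_asc d hd mu g ginv hg G1 G2 HDmu) as Hasc.
  pose proof (Hsum' d r lam hlam) as Hsl. pose proof (Hlen' d r hd lam hlam) as Hll.
  pose proof (Hsum' d r mu hmu) as Hsm. pose proof (Hlen' d r hd mu hmu) as Hlm.
  assert (Hgi : in_W d ginv) by (apply (inW_inv d g ginv); auto).
  rewrite (delta_eq d r hd lam mu hlam hmu g hg Hasc k hk).
  set (f := idx d r lam mu g k). set (L := LL r k).
  assert (fmono : forall t, 0 <= t <= Z.of_nat d -> f t <= f (t + 1))
    by (intros t Ht; apply (idx_adj d r hd lam mu hlam hmu g hg Hasc k hk t Ht)).
  assert (f0 : f 0 = 0) by apply (idx_0 d r hd lam mu hlam hmu g hg k).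
  assert (fL : f (Z.of_nat d + 1) = Z.of_nat L - 1) by apply (idx_last d r hd lam mu hlam hmu g hg k).
  assert (HL : (2 <= L)%nat).
  { unfold L, LL. pose proof (offN_le d r hd lam mu hlam hmu k 2 (r + 2) ltac:(lia)).
    pose proof (Wn_pos d r hd lam mu hlam hmu k 0). pose proof (Wn_pos d r hd lam mu hlam hmu k 1).
    simpl in H. lia. }
  set (dl := nuf d f L).
  assert (Hsd : lsum dl = d) by (apply lsum_nuf; auto; lia).
  assert (Hld : (2 <= length dl)%nat) by (unfold dl; rewrite length_nuf; auto).
  assert (K : forall x x', beta d dl x = beta d dl x' <-> Rel d lam mu g x x').
  { apply (bd_K d hd lam mu Hsl Hll Hsm Hlm g hg Hasc (beta d dl) (npz dl)).
    - apply (beta_mono d hd dl Hsd Hld).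
    - apply (beta_shift d hd dl Hsd Hld).
    - apply (beta_odd d hd dl Hsd Hld).
    - intros t Ht. rewrite !(beta_base d hd dl Hsd Hld) by lia.
      unfold dl. rewrite !(bcount_nuf d f L fmono f0 fL) by lia.
      apply (idx_adj d r hd lam mu hlam hmu g hg Hasc k hk t Ht). }
  intros h. split.
  - intros Hh. destruct (Wsub_to d hd dl Hsd Hld h Hh) as [HW Hb].
    assert (HR : forall x, Rel d lam mu g (h x) x) by (intros x; apply K; auto).
    split.
    + exists (fun z => g (h (ginv z))). split.
      * apply (Wsub_of d hd lam Hsl Hll).
        -- apply inW_comp; [auto|]. apply inW_comp; auto.
        -- intros z. destruct (HR (ginv z)) as [_ E]. rewrite E, G2. reflexivity.
      * intros x. rewrite G1. reflexivity.
    + apply (Wsub_of d hd mu Hsm Hlm); auto. intros x. apply (HR x).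
  - intros [[w [Hw Hgw]] Hm].
    destruct (Wsub_to d hd mu Hsm Hlm h Hm) as [HW Hbm].
    destruct (Wsub_to d hd lam Hsl Hll w Hw) as [_ Hbl].
    apply (Wsub_of d hd dl Hsd Hld); auto. intros x. apply K. split; auto.
    rewrite Hgw. apply Hbl.
Qed.
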